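(* $K(6)=9$.
   Context: Electricity division instance: supply $S>0$ and demands $D=(D[1],\dots,D[n])$ with $0<D[i]\le S$. A schedule partitions the time interval into finitely many subintervals, each assigned a set of households whose total demand is at most $S$; the egalitarian connection-time is the maximum, over schedules, of the minimum over households of the fraction of time the household is connected. For an integer $k\ge1$, a $k$-times bin packing of $D$ assigns $k$ copies of each household (item of size $D[i]$) to bins so that each bin has total size at most $S$ and no bin contains two copies of the same item; $OPT(D_k)$ is the minimum number of bins. $K(D)$ is the smallest positive integer $k$ such that the egalitarian connection-time of the instance equals $k/OPT(D_k)$, and $K(n)$ is the maximum of $K(D)$ over all instances with $n$ households. *)

(* Defs.v *)
From Stdlib Require Import Reals.
From HB Require Import structures.
From mathcomp Require Import all_boot all_order all_algebra.
From mathcomp Require Import Rstruct.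
Set Implicit Arguments. Unset Strict Implicit. Unset Printing Implicit Defensive.
Import Order.TTheory GRing.Theory Num.Theory.
Local Open Scope ring_scope.

Section ElectricityDivision.
Variable n : nat.

Definition valid_instance (S : R) (D : 'I_n -> R) : Prop :=
  0 < S /\ forall i, 0 < D i /\ D i <= S.

Definition feasible (S : R) (D : 'I_n -> R) (A : {set 'I_n}) : bool :=
  \sum_(i in A) D i <= S.

(* A schedule: the time interval (normalised to length 1) is partitioned into
   finitely many subintervals, listed as (length, connected set) pairs; each
   subinterval has positive length, the lengths sum to 1, and each assigned
   set is feasible. *)
Definition is_schedule (S : R) (D : 'I_n -> R)
    (sch : seq (R * {set 'I_n})) : Prop :=
  (forall p, p \in sch -> 0 < p.1 /\ feasible S D p.2) /\
  \sum_(p <- sch) p.1 = 1.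

Definition conn_time (sch : seq (R * {set 'I_n})) (i : 'I_n) : R :=
  \sum_(p <- sch | i \in p.2) p.1.

(* t is the egalitarian connection-time: the maximum over schedules of the
   minimum over households of the connection time. *)
Definition egal_time (S : R) (D : 'I_n -> R) (t : R) : Prop :=
  (exists sch, is_schedule S D sch /\ forall i, t <= conn_time sch i) /\
  (forall sch, is_schedule S D sch -> exists i, conn_time sch i <= t).

(* A k-times bin packing: a list of bins, each a set of items (so no bin
   contains two copies of the same item) of total size at most S, such that
   every item occurs in exactly k bins. *)
Definition k_packing (S : R) (D : 'I_n -> R) (k : nat)
    (P : seq {set 'I_n}) : Prop :=
  (forall B, B \in P -> feasible S D B) /\
  (forall i, count (fun B : {set 'I_n} => i \in B) P = k).

Definition is_OPT (S : R) (D : 'I_n -> R) (k m : nat) : Prop :=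
  (exists P, k_packing S D k P /\ size P = m) /\
  (forall P, k_packing S D k P -> (m <= size P)%N).

Definition K_property (S : R) (D : 'I_n -> R) (k : nat) : Prop :=
  exists (t : R) (m : nat), egal_time S D t /\ is_OPT S D k m /\
    t = (k%:R / m%:R).

Definition is_K_of (S : R) (D : 'I_n -> R) (k : nat) : Prop :=
  (0 < k)%N /\ K_property S D k /\
  (forall k', (0 < k')%N -> (k' < k)%N -> ~ K_property S D k').

Definition is_K_n (k : nat) : Prop :=
  (forall S D, valid_instance S D -> exists kD, is_K_of S D kD /\ (kD <= k)%N) /\
  (exists S D, valid_instance S D /\ is_K_of S D k).

End ElectricityDivision.

(* Main.v *)
Require Import Defs.
From Stdlib Require Import Reals Classical Lia.
From HB Require Import structures.
From mathcomp Require Import all_boot all_order all_algebra perm.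
From mathcomp Require Import Rstruct zify.
Set Implicit Arguments. Unset Strict Implicit. Unset Printing Implicit Defensive.
Import Order.TTheory GRing.Theory Num.Theory.

Definition bitb (x i : nat) : bool := odd (x %/ 2 ^ (5 - i)).

Definition preds (x : nat) : seq nat :=
  [seq x - 2 ^ (5 - i) | i <- iota 0 6 & bitb x i] ++
  [seq x - 2 ^ (5 - i) + 2 ^ (4 - i) | i <- iota 0 5 & bitb x i && ~~ bitb x i.+1].

Record cert := Cert { ck : nat; cbins : seq nat; cys : seq nat; cL : nat }.

Definition nsum (ys : seq nat) (x : nat) : nat :=
  sumn [seq (if bitb x i then nth 0 ys i else 0) | i <- iota 0 6].

Definition valid (fam : nat -> bool) (c : cert) : bool :=
  [&& 0 < ck c, ck c <= 9, 0 < cL c,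
      all (fun b => (b < 64) && fam b) (cbins c),
      all (fun i => count (fun b => bitb b i) (cbins c) == ck c) (iota 0 6),
      all (fun x => fam x ==> (nsum (cys c) x <= cL c)) (iota 0 64) &
      ck c * nsum (cys c) 63 == size (cbins c) * cL c].

Definition table : seq cert := [::
  Cert 1 [:: 1; 2; 4; 8; 16; 32] [:: 1; 1; 1; 1; 1; 1] 1;
  Cert 1 [:: 3; 4; 8; 16; 32] [:: 1; 1; 1; 1; 1; 0] 1;
  Cert 1 [:: 2; 5; 8; 16; 32] [:: 1; 1; 1; 1; 1; 0] 1;
  Cert 1 [:: 2; 4; 9; 16; 32] [:: 1; 1; 1; 1; 1; 0] 1;
  Cert 1 [:: 2; 4; 8; 17; 32] [:: 1; 1; 1; 1; 1; 0] 1;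
  Cert 1 [:: 2; 4; 8; 16; 33] [:: 1; 1; 1; 1; 1; 0] 1;
  Cert 2 [:: 3; 5; 6; 8; 8; 16; 16; 32; 32] [:: 2; 2; 2; 1; 1; 1] 2;
  Cert 1 [:: 6; 9; 16; 32] [:: 1; 1; 1; 1; 0; 0] 1;
  Cert 1 [:: 6; 8; 17; 32] [:: 1; 1; 1; 1; 0; 0] 1;
  Cert 1 [:: 6; 8; 16; 33] [:: 1; 1; 1; 1; 0; 0] 1;
  Cert 1 [:: 6; 9; 16; 32] [:: 1; 1; 1; 1; 0; 0] 1;
  Cert 1 [:: 6; 8; 17; 32] [:: 1; 1; 1; 1; 0; 0] 1;
  Cert 1 [:: 6; 8; 16; 33] [:: 1; 1; 1; 1; 0; 0] 1;
  Cert 1 [:: 6; 8; 17; 32] [:: 1; 1; 1; 1; 0; 0] 1;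
  Cert 1 [:: 6; 8; 16; 33] [:: 1; 1; 1; 1; 0; 0] 1;
  Cert 1 [:: 6; 8; 16; 33] [:: 1; 1; 1; 1; 0; 0] 1;
  Cert 1 [:: 3; 12; 16; 32] [:: 2; 2; 1; 1; 1; 1] 2;
  Cert 2 [:: 6; 10; 12; 17; 17; 32; 32] [:: 2; 1; 1; 1; 1; 1] 2;
  Cert 2 [:: 6; 10; 12; 16; 16; 33; 33] [:: 2; 2; 1; 1; 1; 0] 2;
  Cert 2 [:: 6; 10; 12; 17; 17; 32; 32] [:: 2; 1; 1; 1; 1; 1] 2;
  Cert 1 [:: 12; 18; 33] [:: 1; 1; 1; 0; 0; 0] 1;
  Cert 1 [:: 12; 18; 33] [:: 1; 1; 1; 0; 0; 0] 1;
  Cert 2 [:: 6; 10; 12; 17; 17; 32; 32] [:: 2; 1; 1; 1; 1; 1] 2;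
  Cert 1 [:: 12; 18; 33] [:: 1; 1; 1; 0; 0; 0] 1;
  Cert 1 [:: 12; 18; 33] [:: 1; 1; 1; 0; 0; 0] 1;
  Cert 1 [:: 12; 18; 33] [:: 1; 1; 1; 0; 0; 0] 1;
  Cert 2 [:: 3; 5; 6; 24; 24; 32; 32] [:: 2; 1; 1; 1; 1; 1] 2;
  Cert 1 [:: 6; 24; 33] [:: 1; 1; 1; 1; 1; 1] 2;
  Cert 1 [:: 6; 24; 33] [:: 1; 1; 1; 1; 1; 1] 2;
  Cert 1 [:: 6; 24; 33] [:: 1; 1; 1; 1; 1; 1] 2;
  Cert 1 [:: 6; 24; 33] [:: 1; 1; 1; 1; 1; 1] 2;
  Cert 1 [:: 6; 9; 48] [:: 1; 1; 1; 1; 1; 1] 2;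
  Cert 1 [:: 7; 8; 16; 32] [:: 1; 1; 1; 1; 0; 0] 1;
  Cert 1 [:: 6; 9; 16; 32] [:: 1; 1; 1; 1; 0; 0] 1;
  Cert 1 [:: 6; 8; 17; 32] [:: 1; 1; 1; 1; 0; 0] 1;
  Cert 1 [:: 6; 8; 16; 33] [:: 1; 1; 1; 1; 0; 0] 1;
  Cert 1 [:: 6; 9; 16; 32] [:: 1; 1; 1; 1; 0; 0] 1;
  Cert 1 [:: 6; 8; 17; 32] [:: 1; 1; 1; 1; 0; 0] 1;
  Cert 1 [:: 6; 8; 16; 33] [:: 1; 1; 1; 1; 0; 0] 1;
  Cert 1 [:: 6; 8; 17; 32] [:: 1; 1; 1; 1; 0; 0] 1;
  Cert 1 [:: 6; 8; 16; 33] [:: 1; 1; 1; 1; 0; 0] 1;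
  Cert 1 [:: 6; 8; 16; 33] [:: 1; 1; 1; 1; 0; 0] 1;
  Cert 3 [:: 7; 7; 9; 10; 12; 16; 16; 16; 32; 32; 32] [:: 3; 3; 2; 1; 1; 1] 3;
  Cert 2 [:: 6; 10; 12; 17; 17; 32; 32] [:: 2; 2; 1; 1; 1; 0] 2;
  Cert 2 [:: 6; 10; 12; 16; 16; 33; 33] [:: 2; 2; 1; 1; 1; 0] 2;
  Cert 3 [:: 7; 10; 12; 12; 17; 17; 18; 32; 32; 32] [:: 3; 2; 2; 1; 1; 1] 3;
  Cert 1 [:: 12; 18; 33] [:: 1; 1; 1; 0; 0; 0] 1;
  Cert 1 [:: 12; 18; 33] [:: 1; 1; 1; 0; 0; 0] 1;
  Cert 3 [:: 7; 10; 12; 12; 17; 17; 18; 32; 32; 32] [:: 3; 2; 2; 1; 1; 1] 3;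
  Cert 1 [:: 12; 18; 33] [:: 1; 1; 1; 0; 0; 0] 1;
  Cert 1 [:: 12; 18; 33] [:: 1; 1; 1; 0; 0; 0] 1;
  Cert 1 [:: 12; 18; 33] [:: 1; 1; 1; 0; 0; 0] 1;
  Cert 1 [:: 7; 24; 32] [:: 3; 2; 1; 1; 1; 1] 3;
  Cert 1 [:: 6; 24; 33] [:: 2; 1; 1; 1; 1; 0] 2;
  Cert 4 [:: 7; 7; 12; 20; 24; 24; 24; 33; 33; 34; 34] [:: 3; 2; 2; 2; 1; 1] 4;
  Cert 3 [:: 7; 7; 24; 24; 24; 33; 34; 36] [:: 2; 2; 1; 1; 1; 1] 3;
  Cert 3 [:: 7; 7; 24; 24; 24; 33; 34; 36] [:: 2; 2; 1; 1; 1; 1] 3;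
  Cert 2 [:: 7; 7; 24; 40; 48] [:: 1; 1; 1; 1; 1; 0] 2;
  Cert 1 [:: 4; 11; 16; 32] [:: 1; 1; 1; 1; 0; 0] 1;
  Cert 1 [:: 4; 10; 17; 32] [:: 1; 1; 1; 1; 0; 0] 1;
  Cert 1 [:: 4; 10; 16; 33] [:: 1; 1; 1; 1; 0; 0] 1;
  Cert 1 [:: 4; 10; 17; 32] [:: 1; 1; 1; 1; 0; 0] 1;
  Cert 1 [:: 4; 10; 16; 33] [:: 1; 1; 1; 1; 0; 0] 1;
  Cert 1 [:: 4; 10; 16; 33] [:: 1; 1; 1; 1; 0; 0] 1;
  Cert 1 [:: 4; 8; 19; 32] [:: 1; 1; 1; 1; 0; 0] 1;
  Cert 1 [:: 4; 8; 18; 33] [:: 1; 1; 1; 1; 0; 0] 1;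
  Cert 1 [:: 4; 8; 18; 33] [:: 1; 1; 1; 1; 0; 0] 1;
  Cert 1 [:: 4; 8; 16; 35] [:: 1; 1; 1; 1; 0; 0] 1;
  Cert 2 [:: 7; 11; 12; 16; 16; 32; 32] [:: 2; 2; 1; 1; 1; 0] 2;
  Cert 2 [:: 6; 10; 12; 17; 17; 32; 32] [:: 2; 2; 1; 1; 1; 0] 2;
  Cert 2 [:: 6; 10; 12; 16; 16; 33; 33] [:: 2; 2; 1; 1; 1; 0] 2;
  Cert 4 [:: 7; 11; 12; 12; 12; 17; 17; 18; 18; 32; 32; 32; 32] [:: 4; 3; 2; 2; 1; 1] 4;
  Cert 1 [:: 12; 18; 33] [:: 1; 1; 1; 0; 0; 0] 1;
  Cert 1 [:: 12; 18; 33] [:: 1; 1; 1; 0; 0; 0] 1;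
  Cert 1 [:: 11; 20; 32] [:: 1; 1; 1; 0; 0; 0] 1;
  Cert 1 [:: 12; 18; 33] [:: 1; 1; 1; 0; 0; 0] 1;
  Cert 1 [:: 12; 18; 33] [:: 1; 1; 1; 0; 0; 0] 1;
  Cert 1 [:: 12; 18; 33] [:: 1; 1; 1; 0; 0; 0] 1;
  Cert 1 [:: 7; 24; 32] [:: 3; 2; 1; 1; 1; 1] 3;
  Cert 1 [:: 6; 24; 33] [:: 2; 1; 1; 1; 1; 0] 2;
  Cert 4 [:: 7; 7; 12; 20; 24; 24; 24; 33; 33; 34; 34] [:: 3; 2; 2; 2; 1; 1] 4;
  Cert 3 [:: 7; 7; 24; 24; 24; 33; 34; 36] [:: 2; 2; 1; 1; 1; 1] 3;
  Cert 3 [:: 7; 7; 24; 24; 24; 33; 34; 36] [:: 2; 2; 1; 1; 1; 1] 3;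
  Cert 2 [:: 7; 11; 12; 48; 48] [:: 1; 1; 1; 1; 1; 0] 2;
  Cert 1 [:: 12; 19; 32] [:: 1; 1; 1; 0; 0; 0] 1;
  Cert 1 [:: 12; 18; 33] [:: 1; 1; 1; 0; 0; 0] 1;
  Cert 1 [:: 12; 18; 33] [:: 1; 1; 1; 0; 0; 0] 1;
  Cert 1 [:: 12; 16; 35] [:: 1; 1; 1; 0; 0; 0] 1;
  Cert 1 [:: 12; 19; 32] [:: 1; 1; 1; 0; 0; 0] 1;
  Cert 1 [:: 12; 18; 33] [:: 1; 1; 1; 0; 0; 0] 1;
  Cert 1 [:: 12; 18; 33] [:: 1; 1; 1; 0; 0; 0] 1;
  Cert 1 [:: 12; 18; 33] [:: 1; 1; 1; 0; 0; 0] 1;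
  Cert 1 [:: 12; 16; 35] [:: 1; 1; 1; 0; 0; 0] 1;
  Cert 1 [:: 12; 16; 35] [:: 1; 1; 1; 0; 0; 0] 1;
  Cert 1 [:: 7; 24; 32] [:: 2; 1; 1; 1; 1; 0] 2;
  Cert 1 [:: 6; 24; 33] [:: 2; 1; 1; 1; 1; 0] 2;
  Cert 4 [:: 7; 7; 12; 20; 24; 24; 24; 33; 33; 34; 34] [:: 3; 2; 2; 2; 1; 1] 4;
  Cert 2 [:: 11; 19; 24; 36; 36] [:: 3; 2; 2; 1; 1; 1] 4;
  Cert 2 [:: 12; 19; 19; 36; 40] [:: 1; 1; 1; 1; 1; 0] 2;
  Cert 2 [:: 7; 11; 12; 48; 48] [:: 1; 1; 1; 1; 1; 0] 2;
  Cert 2 [:: 12; 20; 24; 35; 35] [:: 1; 1; 1; 1; 1; 0] 2;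
  Cert 2 [:: 12; 20; 24; 35; 35] [:: 1; 1; 1; 1; 1; 0] 2;
  Cert 2 [:: 12; 20; 24; 35; 35] [:: 1; 1; 1; 1; 1; 0] 2;
  Cert 2 [:: 7; 11; 12; 48; 48] [:: 1; 1; 1; 1; 1; 0] 2;
  Cert 2 [:: 6; 11; 13; 16; 16; 32; 32] [:: 2; 2; 1; 1; 1; 0] 2;
  Cert 2 [:: 6; 10; 12; 17; 17; 32; 32] [:: 2; 2; 1; 1; 1; 0] 2;
  Cert 2 [:: 6; 10; 12; 16; 16; 33; 33] [:: 2; 2; 1; 1; 1; 0] 2;
  Cert 1 [:: 13; 18; 32] [:: 1; 1; 1; 0; 0; 0] 1;
  Cert 1 [:: 12; 18; 33] [:: 1; 1; 1; 0; 0; 0] 1;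
  Cert 1 [:: 12; 18; 33] [:: 1; 1; 1; 0; 0; 0] 1;
  Cert 1 [:: 13; 18; 32] [:: 1; 1; 1; 0; 0; 0] 1;
  Cert 1 [:: 12; 18; 33] [:: 1; 1; 1; 0; 0; 0] 1;
  Cert 1 [:: 12; 18; 33] [:: 1; 1; 1; 0; 0; 0] 1;
  Cert 1 [:: 12; 18; 33] [:: 1; 1; 1; 0; 0; 0] 1;
  Cert 1 [:: 7; 24; 32] [:: 3; 2; 1; 1; 1; 1] 3;
  Cert 1 [:: 6; 24; 33] [:: 2; 1; 1; 1; 1; 0] 2;
  Cert 3 [:: 7; 13; 20; 24; 24; 33; 34; 34] [:: 2; 2; 1; 1; 1; 1] 3;
  Cert 3 [:: 7; 13; 20; 24; 24; 33; 34; 34] [:: 2; 2; 1; 1; 1; 1] 3;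
  Cert 3 [:: 7; 13; 20; 24; 24; 33; 34; 34] [:: 2; 2; 1; 1; 1; 1] 3;
  Cert 2 [:: 6; 11; 13; 48; 48] [:: 1; 1; 1; 1; 1; 0] 2;
  Cert 1 [:: 12; 19; 32] [:: 1; 1; 1; 0; 0; 0] 1;
  Cert 1 [:: 12; 18; 33] [:: 1; 1; 1; 0; 0; 0] 1;
  Cert 1 [:: 12; 18; 33] [:: 1; 1; 1; 0; 0; 0] 1;
  Cert 1 [:: 12; 16; 35] [:: 1; 1; 1; 0; 0; 0] 1;
  Cert 1 [:: 12; 19; 32] [:: 1; 1; 1; 0; 0; 0] 1;
  Cert 1 [:: 12; 18; 33] [:: 1; 1; 1; 0; 0; 0] 1;
  Cert 1 [:: 12; 18; 33] [:: 1; 1; 1; 0; 0; 0] 1;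
  Cert 1 [:: 12; 18; 33] [:: 1; 1; 1; 0; 0; 0] 1;
  Cert 1 [:: 12; 16; 35] [:: 1; 1; 1; 0; 0; 0] 1;
  Cert 1 [:: 12; 16; 35] [:: 1; 1; 1; 0; 0; 0] 1;
  Cert 1 [:: 7; 24; 32] [:: 2; 1; 1; 1; 1; 0] 2;
  Cert 1 [:: 6; 24; 33] [:: 2; 1; 1; 1; 1; 0] 2;
  Cert 5 [:: 13; 13; 13; 19; 20; 20; 24; 24; 33; 34; 34; 34; 34] [:: 4; 3; 2; 2; 1; 1] 5;
  Cert 2 [:: 11; 19; 24; 36; 36] [:: 3; 2; 2; 1; 1; 1] 4;
  Cert 2 [:: 12; 19; 19; 36; 40] [:: 1; 1; 1; 1; 1; 0] 2;
  Cert 2 [:: 6; 11; 13; 48; 48] [:: 1; 1; 1; 1; 1; 0] 2;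
  Cert 2 [:: 12; 20; 24; 35; 35] [:: 1; 1; 1; 1; 1; 0] 2;
  Cert 2 [:: 12; 20; 24; 35; 35] [:: 1; 1; 1; 1; 1; 0] 2;
  Cert 2 [:: 12; 20; 24; 35; 35] [:: 1; 1; 1; 1; 1; 0] 2;
  Cert 2 [:: 6; 11; 13; 48; 48] [:: 1; 1; 1; 1; 1; 0] 2;
  Cert 1 [:: 12; 19; 32] [:: 1; 1; 1; 0; 0; 0] 1;
  Cert 1 [:: 12; 18; 33] [:: 1; 1; 1; 0; 0; 0] 1;
  Cert 1 [:: 12; 18; 33] [:: 1; 1; 1; 0; 0; 0] 1;
  Cert 1 [:: 12; 18; 33] [:: 1; 1; 1; 0; 0; 0] 1;
  Cert 1 [:: 12; 16; 35] [:: 1; 1; 1; 0; 0; 0] 1;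
  Cert 1 [:: 12; 16; 35] [:: 1; 1; 1; 0; 0; 0] 1;
  Cert 1 [:: 12; 16; 35] [:: 1; 1; 1; 0; 0; 0] 1;
  Cert 1 [:: 7; 24; 32] [:: 2; 1; 1; 1; 1; 0] 2;
  Cert 1 [:: 6; 24; 33] [:: 2; 1; 1; 1; 1; 0] 2;
  Cert 2 [:: 13; 21; 24; 34; 34] [:: 3; 2; 2; 1; 1; 1] 4;
  Cert 2 [:: 13; 21; 24; 34; 34] [:: 3; 2; 2; 1; 1; 1] 4;
  Cert 2 [:: 6; 19; 21; 40; 40] [:: 1; 1; 1; 1; 1; 0] 2;
  Cert 2 [:: 6; 11; 13; 48; 48] [:: 1; 1; 1; 1; 1; 0] 2;
  Cert 2 [:: 12; 20; 24; 35; 35] [:: 1; 1; 1; 1; 1; 0] 2;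
  Cert 2 [:: 12; 20; 24; 35; 35] [:: 1; 1; 1; 1; 1; 0] 2;
  Cert 2 [:: 12; 20; 24; 35; 35] [:: 1; 1; 1; 1; 1; 0] 2;
  Cert 2 [:: 6; 11; 13; 48; 48] [:: 1; 1; 1; 1; 1; 0] 2;
  Cert 2 [:: 12; 20; 24; 35; 35] [:: 1; 1; 1; 1; 1; 0] 2;
  Cert 2 [:: 12; 20; 24; 35; 35] [:: 1; 1; 1; 1; 1; 0] 2;
  Cert 2 [:: 6; 11; 13; 48; 48] [:: 1; 1; 1; 1; 1; 0] 2;
  Cert 1 [:: 6; 25; 32] [:: 2; 1; 1; 1; 1; 0] 2;
  Cert 1 [:: 6; 24; 33] [:: 2; 1; 1; 1; 1; 0] 2;
  Cert 2 [:: 12; 21; 25; 34; 34] [:: 2; 1; 1; 1; 0; 0] 2;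
  Cert 2 [:: 12; 21; 25; 34; 34] [:: 1; 1; 1; 1; 1; 0] 2;
  Cert 2 [:: 12; 21; 25; 34; 34] [:: 1; 1; 1; 1; 1; 0] 2;
  Cert 2 [:: 6; 11; 13; 48; 48] [:: 1; 1; 1; 1; 1; 0] 2;
  Cert 2 [:: 12; 20; 24; 35; 35] [:: 1; 1; 1; 1; 1; 0] 2;
  Cert 2 [:: 12; 20; 24; 35; 35] [:: 1; 1; 1; 1; 1; 0] 2;
  Cert 2 [:: 12; 20; 24; 35; 35] [:: 1; 1; 1; 1; 1; 0] 2;
  Cert 2 [:: 6; 11; 13; 48; 48] [:: 1; 1; 1; 1; 1; 0] 2;
  Cert 2 [:: 12; 20; 24; 35; 35] [:: 1; 1; 1; 1; 1; 0] 2;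
  Cert 2 [:: 12; 20; 24; 35; 35] [:: 1; 1; 1; 1; 1; 0] 2;
  Cert 2 [:: 6; 11; 13; 48; 48] [:: 1; 1; 1; 1; 1; 0] 2;
  Cert 2 [:: 12; 20; 24; 35; 35] [:: 1; 1; 1; 1; 1; 0] 2;
  Cert 2 [:: 6; 11; 13; 48; 48] [:: 1; 1; 1; 1; 1; 0] 2;
  Cert 2 [:: 6; 10; 12; 49; 49] [:: 1; 1; 1; 1; 1; 0] 2;
  Cert 3 [:: 7; 11; 13; 14; 16; 16; 16; 32; 32; 32] [:: 3; 3; 1; 1; 1; 1] 3;
  Cert 1 [:: 14; 17; 32] [:: 1; 1; 1; 0; 0; 0] 1;
  Cert 1 [:: 14; 16; 33] [:: 1; 1; 1; 0; 0; 0] 1;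
  Cert 1 [:: 14; 17; 32] [:: 1; 1; 1; 0; 0; 0] 1;
  Cert 1 [:: 14; 16; 33] [:: 1; 1; 1; 0; 0; 0] 1;
  Cert 1 [:: 14; 16; 33] [:: 1; 1; 1; 0; 0; 0] 1;
  Cert 1 [:: 14; 17; 32] [:: 1; 1; 1; 0; 0; 0] 1;
  Cert 1 [:: 14; 16; 33] [:: 1; 1; 1; 0; 0; 0] 1;
  Cert 1 [:: 14; 16; 33] [:: 1; 1; 1; 0; 0; 0] 1;
  Cert 1 [:: 14; 16; 33] [:: 1; 1; 1; 0; 0; 0] 1;
  Cert 1 [:: 7; 24; 32] [:: 3; 2; 1; 1; 1; 1] 3;
  Cert 3 [:: 14; 14; 18; 20; 24; 33; 33; 33] [:: 2; 2; 1; 1; 1; 1] 3;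
  Cert 3 [:: 14; 14; 18; 20; 24; 33; 33; 33] [:: 2; 2; 1; 1; 1; 1] 3;
  Cert 3 [:: 14; 14; 18; 20; 24; 33; 33; 33] [:: 2; 2; 1; 1; 1; 1] 3;
  Cert 3 [:: 14; 14; 18; 20; 24; 33; 33; 33] [:: 2; 2; 1; 1; 1; 1] 3;
  Cert 3 [:: 7; 11; 13; 14; 48; 48; 48] [:: 2; 1; 1; 1; 1; 1] 3;
  Cert 1 [:: 12; 19; 32] [:: 1; 1; 1; 0; 0; 0] 1;
  Cert 1 [:: 12; 18; 33] [:: 1; 1; 1; 0; 0; 0] 1;
  Cert 1 [:: 12; 18; 33] [:: 1; 1; 1; 0; 0; 0] 1;
  Cert 1 [:: 12; 16; 35] [:: 1; 1; 1; 0; 0; 0] 1;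
  Cert 1 [:: 12; 19; 32] [:: 1; 1; 1; 0; 0; 0] 1;
  Cert 1 [:: 12; 18; 33] [:: 1; 1; 1; 0; 0; 0] 1;
  Cert 1 [:: 12; 18; 33] [:: 1; 1; 1; 0; 0; 0] 1;
  Cert 1 [:: 12; 18; 33] [:: 1; 1; 1; 0; 0; 0] 1;
  Cert 1 [:: 12; 16; 35] [:: 1; 1; 1; 0; 0; 0] 1;
  Cert 1 [:: 12; 16; 35] [:: 1; 1; 1; 0; 0; 0] 1;
  Cert 5 [:: 13; 13; 14; 14; 19; 19; 19; 20; 24; 32; 32; 32; 32; 32] [:: 5; 3; 2; 2; 1; 1] 5;
  Cert 3 [:: 14; 14; 18; 20; 24; 33; 33; 33] [:: 3; 2; 1; 1; 1; 0] 3;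
  Cert 5 [:: 13; 13; 13; 19; 20; 20; 24; 24; 33; 34; 34; 34; 34] [:: 4; 3; 2; 2; 1; 1] 5;
  Cert 2 [:: 11; 19; 24; 36; 36] [:: 3; 2; 2; 1; 1; 1] 4;
  Cert 5 [:: 13; 14; 19; 19; 19; 19; 20; 36; 36; 40; 40; 40] [:: 3; 3; 2; 2; 1; 1] 5;
  Cert 3 [:: 7; 11; 13; 14; 48; 48; 48] [:: 2; 1; 1; 1; 1; 1] 3;
  Cert 2 [:: 12; 20; 24; 35; 35] [:: 2; 1; 1; 1; 0; 0] 2;
  Cert 5 [:: 13; 14; 20; 20; 24; 24; 24; 35; 35; 35; 35; 36] [:: 3; 3; 2; 2; 1; 1] 5;
  Cert 5 [:: 13; 14; 20; 20; 24; 24; 24; 35; 35; 35; 35; 36] [:: 3; 3; 2; 2; 1; 1] 5;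
  Cert 4 [:: 13; 13; 14; 14; 19; 35; 48; 48; 48] [:: 2; 2; 2; 1; 1; 1] 4;
  Cert 1 [:: 12; 19; 32] [:: 1; 1; 1; 0; 0; 0] 1;
  Cert 1 [:: 12; 18; 33] [:: 1; 1; 1; 0; 0; 0] 1;
  Cert 1 [:: 12; 18; 33] [:: 1; 1; 1; 0; 0; 0] 1;
  Cert 1 [:: 12; 18; 33] [:: 1; 1; 1; 0; 0; 0] 1;
  Cert 1 [:: 12; 16; 35] [:: 1; 1; 1; 0; 0; 0] 1;
  Cert 1 [:: 12; 16; 35] [:: 1; 1; 1; 0; 0; 0] 1;
  Cert 1 [:: 12; 16; 35] [:: 1; 1; 1; 0; 0; 0] 1;
  Cert 4 [:: 11; 14; 14; 19; 21; 21; 24; 32; 32; 32; 32] [:: 4; 2; 2; 1; 1; 1] 4;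
  Cert 3 [:: 14; 14; 18; 20; 24; 33; 33; 33] [:: 3; 2; 1; 1; 1; 0] 3;
  Cert 2 [:: 13; 21; 24; 34; 34] [:: 3; 2; 2; 1; 1; 1] 4;
  Cert 2 [:: 13; 21; 24; 34; 34] [:: 3; 2; 2; 1; 1; 1] 4;
  Cert 3 [:: 14; 19; 21; 21; 34; 40; 40] [:: 2; 1; 1; 1; 1; 1] 3;
  Cert 3 [:: 7; 11; 13; 14; 48; 48; 48] [:: 2; 1; 1; 1; 1; 1] 3;
  Cert 2 [:: 12; 20; 24; 35; 35] [:: 2; 1; 1; 1; 0; 0] 2;
  Cert 3 [:: 14; 21; 24; 24; 35; 35; 36] [:: 2; 2; 1; 1; 1; 0] 3;
  Cert 3 [:: 14; 21; 24; 24; 35; 35; 36] [:: 2; 2; 1; 1; 1; 0] 3;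
  Cert 4 [:: 13; 13; 14; 14; 19; 35; 48; 48; 48] [:: 2; 2; 2; 1; 1; 1] 4;
  Cert 3 [:: 14; 20; 24; 24; 35; 35; 37] [:: 2; 2; 1; 1; 1; 0] 3;
  Cert 3 [:: 14; 20; 24; 24; 35; 35; 37] [:: 2; 2; 1; 1; 1; 0] 3;
  Cert 4 [:: 11; 13; 14; 14; 19; 37; 48; 48; 48] [:: 2; 2; 2; 1; 1; 1] 4;
  Cert 3 [:: 14; 14; 19; 21; 25; 32; 32; 32] [:: 3; 2; 1; 1; 1; 0] 3;
  Cert 3 [:: 14; 14; 18; 20; 24; 33; 33; 33] [:: 3; 2; 1; 1; 1; 0] 3;
  Cert 2 [:: 12; 21; 25; 34; 34] [:: 2; 1; 1; 1; 0; 0] 2;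
  Cert 3 [:: 14; 21; 25; 25; 34; 34; 36] [:: 2; 1; 1; 1; 1; 1] 3;
  Cert 3 [:: 14; 21; 25; 25; 34; 34; 36] [:: 2; 1; 1; 1; 1; 1] 3;
  Cert 3 [:: 7; 11; 13; 14; 48; 48; 48] [:: 2; 1; 1; 1; 1; 1] 3;
  Cert 2 [:: 12; 20; 24; 35; 35] [:: 2; 1; 1; 1; 0; 0] 2;
  Cert 3 [:: 14; 20; 24; 25; 35; 35; 36] [:: 2; 2; 1; 1; 1; 0] 3;
  Cert 3 [:: 14; 20; 24; 25; 35; 35; 36] [:: 2; 2; 1; 1; 1; 0] 3;
  Cert 5 [:: 13; 14; 14; 14; 21; 25; 35; 35; 48; 48; 48] [:: 3; 2; 2; 2; 1; 1] 5;
  Cert 3 [:: 14; 20; 24; 24; 35; 35; 37] [:: 2; 2; 1; 1; 1; 0] 3;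
  Cert 3 [:: 14; 20; 24; 24; 35; 35; 37] [:: 2; 2; 1; 1; 1; 0] 3;
  Cert 6 [:: 14; 14; 14; 14; 19; 25; 25; 35; 37; 37; 48; 48; 48] [:: 3; 3; 2; 2; 2; 1] 6;
  Cert 3 [:: 14; 20; 24; 24; 35; 35; 37] [:: 2; 2; 1; 1; 1; 0] 3;
  Cert 6 [:: 14; 14; 14; 14; 19; 19; 21; 37; 41; 41; 48; 48; 48] [:: 3; 3; 2; 2; 2; 1] 6;
  Cert 1 [:: 14; 49] [:: 2; 1; 1; 1; 1; 0] 3;
  Cert 1 [:: 12; 19; 32] [:: 1; 1; 1; 0; 0; 0] 1;
  Cert 1 [:: 12; 18; 33] [:: 1; 1; 1; 0; 0; 0] 1;
  Cert 1 [:: 12; 18; 33] [:: 1; 1; 1; 0; 0; 0] 1;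
  Cert 1 [:: 12; 18; 33] [:: 1; 1; 1; 0; 0; 0] 1;
  Cert 1 [:: 12; 16; 35] [:: 1; 1; 1; 0; 0; 0] 1;
  Cert 1 [:: 12; 16; 35] [:: 1; 1; 1; 0; 0; 0] 1;
  Cert 1 [:: 12; 16; 35] [:: 1; 1; 1; 0; 0; 0] 1;
  Cert 1 [:: 12; 16; 35] [:: 1; 1; 1; 0; 0; 0] 1;
  Cert 4 [:: 11; 11; 13; 21; 22; 22; 24; 32; 32; 32; 32] [:: 4; 2; 2; 1; 1; 1] 4;
  Cert 2 [:: 14; 22; 24; 33; 33] [:: 3; 2; 2; 1; 1; 1] 4;
  Cert 2 [:: 14; 22; 24; 33; 33] [:: 3; 2; 2; 1; 1; 1] 4;
  Cert 2 [:: 14; 22; 24; 33; 33] [:: 3; 2; 2; 1; 1; 1] 4;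
  Cert 3 [:: 7; 19; 21; 22; 40; 40; 40] [:: 2; 1; 1; 1; 1; 1] 3;
  Cert 3 [:: 7; 11; 13; 14; 48; 48; 48] [:: 2; 1; 1; 1; 1; 1] 3;
  Cert 2 [:: 12; 20; 24; 35; 35] [:: 2; 1; 1; 1; 0; 0] 2;
  Cert 3 [:: 13; 22; 24; 24; 35; 35; 36] [:: 4; 3; 3; 2; 1; 1] 6;
  Cert 4 [:: 13; 21; 22; 22; 24; 35; 35; 40; 40] [:: 2; 2; 2; 1; 1; 1] 4;
  Cert 4 [:: 13; 13; 14; 14; 19; 35; 48; 48; 48] [:: 2; 2; 2; 1; 1; 1] 4;
  Cert 4 [:: 14; 22; 24; 24; 24; 35; 35; 37; 37] [:: 2; 2; 2; 1; 1; 1] 4;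
  Cert 4 [:: 14; 22; 24; 24; 24; 35; 35; 37; 37] [:: 2; 2; 2; 1; 1; 1] 4;
  Cert 4 [:: 11; 13; 14; 14; 19; 37; 48; 48; 48] [:: 2; 2; 2; 1; 1; 1] 4;
  Cert 4 [:: 14; 22; 24; 24; 24; 35; 35; 37; 37] [:: 2; 2; 2; 1; 1; 1] 4;
  Cert 4 [:: 14; 22; 24; 24; 24; 35; 35; 37; 37] [:: 2; 2; 2; 1; 1; 1] 4;
  Cert 4 [:: 11; 13; 13; 14; 19; 38; 48; 48; 48] [:: 2; 2; 2; 1; 1; 1] 4;
  Cert 3 [:: 11; 13; 22; 22; 25; 32; 32; 32] [:: 3; 1; 1; 1; 1; 1] 3;
  Cert 2 [:: 14; 22; 24; 33; 33] [:: 2; 1; 1; 1; 0; 0] 2;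
  Cert 2 [:: 14; 22; 24; 33; 33] [:: 2; 1; 1; 1; 0; 0] 2;
  Cert 3 [:: 11; 22; 25; 25; 34; 36; 36] [:: 2; 1; 1; 1; 1; 1] 3;
  Cert 3 [:: 11; 22; 25; 25; 34; 36; 36] [:: 2; 1; 1; 1; 1; 1] 3;
  Cert 3 [:: 7; 11; 13; 14; 48; 48; 48] [:: 2; 1; 1; 1; 1; 1] 3;
  Cert 2 [:: 12; 20; 24; 35; 35] [:: 2; 1; 1; 1; 0; 0] 2;
  Cert 4 [:: 14; 22; 24; 25; 25; 35; 35; 36; 36] [:: 3; 2; 2; 1; 1; 0] 4;
  Cert 5 [:: 14; 22; 22; 25; 25; 25; 35; 35; 36; 36; 40] [:: 3; 2; 2; 2; 1; 1] 5;
  Cert 5 [:: 13; 14; 14; 14; 21; 25; 35; 35; 48; 48; 48] [:: 3; 2; 2; 2; 1; 1] 5;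
  Cert 4 [:: 14; 22; 24; 24; 24; 35; 35; 37; 37] [:: 3; 2; 2; 1; 1; 0] 4;
  Cert 7 [:: 14; 22; 22; 22; 22; 25; 25; 25; 35; 35; 37; 37; 40; 40; 40] [:: 4; 3; 3; 2; 2; 1] 7;
  Cert 7 [:: 14; 14; 14; 14; 22; 25; 25; 25; 35; 35; 37; 37; 48; 48; 48] [:: 4; 3; 3; 2; 2; 1] 7;
  Cert 1 [:: 22; 41] [:: 1; 1; 0; 0; 0; 0] 1;
  Cert 1 [:: 22; 41] [:: 2; 1; 1; 1; 1; 0] 3;
  Cert 1 [:: 14; 49] [:: 2; 1; 1; 1; 1; 0] 3;
  Cert 1 [:: 25; 38] [:: 1; 1; 0; 0; 0; 0] 1;
  Cert 1 [:: 25; 38] [:: 1; 1; 0; 0; 0; 0] 1;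
  Cert 1 [:: 25; 38] [:: 3; 2; 2; 1; 1; 1] 5;
  Cert 1 [:: 25; 38] [:: 1; 1; 0; 0; 0; 0] 1;
  Cert 1 [:: 22; 41] [:: 2; 2; 1; 1; 1; 1] 4;
  Cert 1 [:: 14; 49] [:: 1; 1; 1; 1; 1; 1] 3;
  Cert 3 [:: 11; 13; 22; 22; 25; 32; 32; 32] [:: 3; 1; 1; 1; 1; 1] 3;
  Cert 2 [:: 14; 22; 24; 33; 33] [:: 2; 1; 1; 1; 0; 0] 2;
  Cert 2 [:: 14; 22; 24; 33; 33] [:: 2; 1; 1; 1; 0; 0] 2;
  Cert 3 [:: 11; 22; 25; 26; 33; 36; 36] [:: 2; 1; 1; 1; 1; 1] 3;
  Cert 3 [:: 11; 22; 25; 26; 33; 36; 36] [:: 2; 1; 1; 1; 1; 1] 3;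
  Cert 3 [:: 7; 11; 13; 14; 48; 48; 48] [:: 2; 1; 1; 1; 1; 1] 3;
  Cert 2 [:: 12; 20; 24; 35; 35] [:: 2; 1; 1; 1; 0; 0] 2;
  Cert 5 [:: 14; 22; 25; 25; 25; 26; 35; 35; 36; 36; 36] [:: 3; 2; 2; 2; 1; 1] 5;
  Cert 5 [:: 14; 22; 25; 25; 25; 26; 35; 35; 36; 36; 36] [:: 3; 2; 2; 2; 1; 1] 5;
  Cert 5 [:: 13; 14; 14; 14; 21; 25; 35; 35; 48; 48; 48] [:: 3; 2; 2; 2; 1; 1] 5;
  Cert 1 [:: 26; 37] [:: 1; 1; 0; 0; 0; 0] 1;
  Cert 1 [:: 26; 37] [:: 1; 1; 0; 0; 0; 0] 1;
  Cert 1 [:: 26; 37] [:: 2; 1; 1; 1; 1; 0] 3;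
  Cert 1 [:: 26; 37] [:: 1; 1; 0; 0; 0; 0] 1;
  Cert 1 [:: 22; 41] [:: 2; 1; 1; 1; 1; 0] 3;
  Cert 1 [:: 14; 49] [:: 2; 1; 1; 1; 1; 0] 3;
  Cert 1 [:: 26; 37] [:: 1; 1; 0; 0; 0; 0] 1;
  Cert 1 [:: 26; 37] [:: 1; 1; 0; 0; 0; 0] 1;
  Cert 1 [:: 25; 38] [:: 3; 2; 2; 1; 1; 1] 5;
  Cert 1 [:: 26; 37] [:: 1; 1; 0; 0; 0; 0] 1;
  Cert 1 [:: 22; 41] [:: 2; 2; 1; 1; 1; 1] 4;
  Cert 1 [:: 14; 49] [:: 1; 1; 1; 1; 1; 1] 3;
  Cert 1 [:: 26; 37] [:: 1; 1; 0; 0; 0; 0] 1;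
  Cert 1 [:: 22; 41] [:: 2; 2; 1; 1; 1; 1] 4;
  Cert 1 [:: 14; 49] [:: 1; 1; 1; 1; 1; 1] 3;
  Cert 1 [:: 14; 49] [:: 1; 1; 1; 1; 1; 1] 3;
  Cert 3 [:: 11; 13; 22; 22; 25; 32; 32; 32] [:: 3; 1; 1; 1; 1; 1] 3;
  Cert 3 [:: 14; 22; 26; 28; 33; 33; 33] [:: 2; 1; 1; 1; 1; 1] 3;
  Cert 3 [:: 14; 22; 26; 28; 33; 33; 33] [:: 2; 1; 1; 1; 1; 1] 3;
  Cert 3 [:: 14; 22; 26; 28; 33; 33; 33] [:: 2; 1; 1; 1; 1; 1] 3;
  Cert 3 [:: 14; 22; 26; 28; 33; 33; 33] [:: 2; 1; 1; 1; 1; 1] 3;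
  Cert 3 [:: 7; 11; 13; 14; 48; 48; 48] [:: 2; 1; 1; 1; 1; 1] 3;
  Cert 1 [:: 28; 35] [:: 1; 1; 0; 0; 0; 0] 1;
  Cert 1 [:: 28; 35] [:: 1; 1; 0; 0; 0; 0] 1;
  Cert 1 [:: 28; 35] [:: 1; 1; 0; 0; 0; 0] 1;
  Cert 1 [:: 28; 35] [:: 2; 1; 1; 1; 1; 0] 3;
  Cert 1 [:: 28; 35] [:: 1; 1; 0; 0; 0; 0] 1;
  Cert 1 [:: 28; 35] [:: 1; 1; 0; 0; 0; 0] 1;
  Cert 1 [:: 26; 37] [:: 2; 1; 1; 1; 1; 0] 3;
  Cert 1 [:: 28; 35] [:: 1; 1; 0; 0; 0; 0] 1;
  Cert 1 [:: 22; 41] [:: 2; 1; 1; 1; 1; 0] 3;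
  Cert 1 [:: 14; 49] [:: 2; 1; 1; 1; 1; 0] 3;
  Cert 1 [:: 28; 35] [:: 1; 1; 0; 0; 0; 0] 1;
  Cert 1 [:: 28; 35] [:: 1; 1; 0; 0; 0; 0] 1;
  Cert 1 [:: 25; 38] [:: 3; 2; 2; 1; 1; 1] 5;
  Cert 1 [:: 28; 35] [:: 1; 1; 0; 0; 0; 0] 1;
  Cert 1 [:: 22; 41] [:: 2; 2; 1; 1; 1; 1] 4;
  Cert 1 [:: 14; 49] [:: 1; 1; 1; 1; 1; 1] 3;
  Cert 1 [:: 28; 35] [:: 1; 1; 0; 0; 0; 0] 1;
  Cert 1 [:: 22; 41] [:: 2; 2; 1; 1; 1; 1] 4;
  Cert 1 [:: 14; 49] [:: 1; 1; 1; 1; 1; 1] 3;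
  Cert 1 [:: 14; 49] [:: 1; 1; 1; 1; 1; 1] 3;
  Cert 1 [:: 28; 35] [:: 1; 1; 0; 0; 0; 0] 1;
  Cert 1 [:: 22; 41] [:: 2; 2; 1; 1; 1; 1] 4;
  Cert 1 [:: 14; 49] [:: 1; 1; 1; 1; 1; 1] 3;
  Cert 1 [:: 14; 49] [:: 1; 1; 1; 1; 1; 1] 3;
  Cert 1 [:: 14; 49] [:: 1; 1; 1; 1; 1; 1] 3;
  Cert 1 [:: 14; 49] [:: 1; 1; 1; 1; 1; 1] 3;
  Cert 1 [:: 15; 16; 32] [:: 1; 1; 1; 0; 0; 0] 1;
  Cert 1 [:: 14; 17; 32] [:: 1; 1; 1; 0; 0; 0] 1;
  Cert 1 [:: 14; 16; 33] [:: 1; 1; 1; 0; 0; 0] 1;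
  Cert 1 [:: 14; 17; 32] [:: 1; 1; 1; 0; 0; 0] 1;
  Cert 1 [:: 14; 16; 33] [:: 1; 1; 1; 0; 0; 0] 1;
  Cert 1 [:: 14; 16; 33] [:: 1; 1; 1; 0; 0; 0] 1;
  Cert 1 [:: 14; 17; 32] [:: 1; 1; 1; 0; 0; 0] 1;
  Cert 1 [:: 14; 16; 33] [:: 1; 1; 1; 0; 0; 0] 1;
  Cert 1 [:: 14; 16; 33] [:: 1; 1; 1; 0; 0; 0] 1;
  Cert 1 [:: 14; 16; 33] [:: 1; 1; 1; 0; 0; 0] 1;
  Cert 4 [:: 15; 15; 15; 17; 18; 20; 24; 32; 32; 32; 32] [:: 4; 3; 1; 1; 1; 1] 4;
  Cert 3 [:: 14; 14; 18; 20; 24; 33; 33; 33] [:: 3; 2; 1; 1; 1; 0] 3;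
  Cert 2 [:: 15; 20; 24; 33; 34] [:: 3; 3; 1; 1; 1; 1] 4;
  Cert 2 [:: 15; 20; 24; 33; 34] [:: 3; 3; 1; 1; 1; 1] 4;
  Cert 2 [:: 15; 20; 24; 33; 34] [:: 3; 3; 1; 1; 1; 1] 4;
  Cert 1 [:: 15; 48] [:: 3; 1; 1; 1; 1; 1] 4;
  Cert 1 [:: 12; 19; 32] [:: 1; 1; 1; 0; 0; 0] 1;
  Cert 1 [:: 12; 18; 33] [:: 1; 1; 1; 0; 0; 0] 1;
  Cert 1 [:: 12; 18; 33] [:: 1; 1; 1; 0; 0; 0] 1;
  Cert 1 [:: 12; 16; 35] [:: 1; 1; 1; 0; 0; 0] 1;
  Cert 1 [:: 12; 19; 32] [:: 1; 1; 1; 0; 0; 0] 1;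
  Cert 1 [:: 12; 18; 33] [:: 1; 1; 1; 0; 0; 0] 1;
  Cert 1 [:: 12; 18; 33] [:: 1; 1; 1; 0; 0; 0] 1;
  Cert 1 [:: 12; 18; 33] [:: 1; 1; 1; 0; 0; 0] 1;
  Cert 1 [:: 12; 16; 35] [:: 1; 1; 1; 0; 0; 0] 1;
  Cert 1 [:: 12; 16; 35] [:: 1; 1; 1; 0; 0; 0] 1;
  Cert 3 [:: 15; 15; 19; 20; 24; 32; 32; 32] [:: 3; 2; 1; 1; 1; 0] 3;
  Cert 3 [:: 14; 14; 18; 20; 24; 33; 33; 33] [:: 3; 2; 1; 1; 1; 0] 3;
  Cert 2 [:: 15; 20; 24; 33; 34] [:: 5; 4; 2; 2; 1; 1] 6;
  Cert 5 [:: 15; 15; 19; 19; 24; 24; 24; 33; 34; 36; 36; 36] [:: 4; 3; 2; 1; 1; 1] 5;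
  Cert 3 [:: 15; 19; 19; 20; 36; 40; 40] [:: 2; 2; 1; 1; 1; 0] 3;
  Cert 1 [:: 15; 48] [:: 3; 1; 1; 1; 1; 1] 4;
  Cert 2 [:: 12; 20; 24; 35; 35] [:: 2; 1; 1; 1; 0; 0] 2;
  Cert 3 [:: 15; 20; 24; 24; 35; 35; 36] [:: 2; 2; 1; 1; 1; 0] 3;
  Cert 3 [:: 15; 20; 24; 24; 35; 35; 36] [:: 2; 2; 1; 1; 1; 0] 3;
  Cert 1 [:: 15; 48] [:: 2; 1; 1; 1; 1; 0] 3;
  Cert 1 [:: 12; 19; 32] [:: 1; 1; 1; 0; 0; 0] 1;
  Cert 1 [:: 12; 18; 33] [:: 1; 1; 1; 0; 0; 0] 1;
  Cert 1 [:: 12; 18; 33] [:: 1; 1; 1; 0; 0; 0] 1;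
  Cert 1 [:: 12; 18; 33] [:: 1; 1; 1; 0; 0; 0] 1;
  Cert 1 [:: 12; 16; 35] [:: 1; 1; 1; 0; 0; 0] 1;
  Cert 1 [:: 12; 16; 35] [:: 1; 1; 1; 0; 0; 0] 1;
  Cert 1 [:: 12; 16; 35] [:: 1; 1; 1; 0; 0; 0] 1;
  Cert 3 [:: 14; 15; 19; 21; 24; 32; 32; 32] [:: 3; 2; 1; 1; 1; 0] 3;
  Cert 3 [:: 14; 14; 18; 20; 24; 33; 33; 33] [:: 3; 2; 1; 1; 1; 0] 3;
  Cert 2 [:: 13; 21; 24; 34; 34] [:: 2; 1; 1; 1; 0; 0] 2;
  Cert 5 [:: 15; 15; 21; 21; 24; 24; 24; 33; 34; 34; 34; 36] [:: 4; 3; 2; 1; 1; 1] 5;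
  Cert 3 [:: 14; 19; 21; 21; 34; 40; 40] [:: 2; 2; 1; 1; 1; 0] 3;
  Cert 1 [:: 15; 48] [:: 3; 1; 1; 1; 1; 1] 4;
  Cert 2 [:: 12; 20; 24; 35; 35] [:: 2; 1; 1; 1; 0; 0] 2;
  Cert 3 [:: 14; 21; 24; 24; 35; 35; 36] [:: 2; 2; 1; 1; 1; 0] 3;
  Cert 3 [:: 14; 21; 24; 24; 35; 35; 36] [:: 2; 2; 1; 1; 1; 0] 3;
  Cert 1 [:: 15; 48] [:: 2; 1; 1; 1; 1; 0] 3;
  Cert 3 [:: 14; 20; 24; 24; 35; 35; 37] [:: 2; 2; 1; 1; 1; 0] 3;
  Cert 3 [:: 14; 20; 24; 24; 35; 35; 37] [:: 2; 2; 1; 1; 1; 0] 3;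
  Cert 1 [:: 15; 48] [:: 2; 1; 1; 1; 1; 0] 3;
  Cert 3 [:: 14; 14; 19; 21; 25; 32; 32; 32] [:: 3; 2; 1; 1; 1; 0] 3;
  Cert 3 [:: 14; 14; 18; 20; 24; 33; 33; 33] [:: 3; 2; 1; 1; 1; 0] 3;
  Cert 2 [:: 12; 21; 25; 34; 34] [:: 2; 1; 1; 1; 0; 0] 2;
  Cert 3 [:: 14; 21; 25; 25; 34; 34; 36] [:: 2; 2; 1; 1; 1; 0] 3;
  Cert 3 [:: 14; 21; 25; 25; 34; 34; 36] [:: 2; 2; 1; 1; 1; 0] 3;
  Cert 1 [:: 15; 48] [:: 3; 1; 1; 1; 1; 1] 4;
  Cert 2 [:: 12; 20; 24; 35; 35] [:: 2; 1; 1; 1; 0; 0] 2;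
  Cert 3 [:: 14; 20; 24; 25; 35; 35; 36] [:: 2; 2; 1; 1; 1; 0] 3;
  Cert 3 [:: 14; 20; 24; 25; 35; 35; 36] [:: 2; 2; 1; 1; 1; 0] 3;
  Cert 1 [:: 15; 48] [:: 2; 1; 1; 1; 1; 0] 3;
  Cert 3 [:: 14; 20; 24; 24; 35; 35; 37] [:: 2; 2; 1; 1; 1; 0] 3;
  Cert 3 [:: 14; 20; 24; 24; 35; 35; 37] [:: 2; 2; 1; 1; 1; 0] 3;
  Cert 1 [:: 15; 48] [:: 2; 1; 1; 1; 1; 0] 3;
  Cert 3 [:: 14; 20; 24; 24; 35; 35; 37] [:: 2; 2; 1; 1; 1; 0] 3;
  Cert 1 [:: 15; 48] [:: 2; 1; 1; 1; 1; 0] 3;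
  Cert 1 [:: 14; 49] [:: 2; 1; 1; 1; 1; 0] 3;
  Cert 1 [:: 12; 19; 32] [:: 1; 1; 1; 0; 0; 0] 1;
  Cert 1 [:: 12; 18; 33] [:: 1; 1; 1; 0; 0; 0] 1;
  Cert 1 [:: 12; 18; 33] [:: 1; 1; 1; 0; 0; 0] 1;
  Cert 1 [:: 12; 18; 33] [:: 1; 1; 1; 0; 0; 0] 1;
  Cert 1 [:: 12; 16; 35] [:: 1; 1; 1; 0; 0; 0] 1;
  Cert 1 [:: 12; 16; 35] [:: 1; 1; 1; 0; 0; 0] 1;
  Cert 1 [:: 12; 16; 35] [:: 1; 1; 1; 0; 0; 0] 1;
  Cert 1 [:: 12; 16; 35] [:: 1; 1; 1; 0; 0; 0] 1;
  Cert 5 [:: 15; 15; 15; 19; 21; 22; 24; 24; 32; 32; 32; 32; 32] [:: 5; 3; 2; 1; 1; 1] 5;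
  Cert 2 [:: 14; 22; 24; 33; 33] [:: 2; 1; 1; 1; 0; 0] 2;
  Cert 2 [:: 14; 22; 24; 33; 33] [:: 2; 1; 1; 1; 0; 0] 2;
  Cert 5 [:: 15; 15; 22; 22; 24; 24; 24; 33; 33; 33; 34; 36] [:: 4; 3; 2; 1; 1; 1] 5;
  Cert 4 [:: 15; 19; 21; 22; 22; 33; 40; 40; 40] [:: 3; 2; 1; 1; 1; 1] 4;
  Cert 1 [:: 15; 48] [:: 3; 1; 1; 1; 1; 1] 4;
  Cert 2 [:: 12; 20; 24; 35; 35] [:: 2; 1; 1; 1; 0; 0] 2;
  Cert 7 [:: 15; 15; 21; 22; 24; 24; 24; 24; 24; 35; 35; 35; 35; 36; 36; 36] [:: 5; 4; 3; 2; 1; 1] 7;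
  Cert 5 [:: 15; 21; 21; 22; 22; 24; 35; 35; 40; 40; 40] [:: 3; 3; 2; 1; 1; 1] 5;
  Cert 1 [:: 15; 48] [:: 2; 1; 1; 1; 1; 0] 3;
  Cert 4 [:: 14; 22; 24; 24; 24; 35; 35; 37; 37] [:: 3; 2; 2; 1; 1; 0] 4;
  Cert 5 [:: 15; 22; 22; 24; 24; 24; 35; 35; 37; 37; 40] [:: 3; 3; 2; 1; 1; 1] 5;
  Cert 1 [:: 15; 48] [:: 2; 1; 1; 1; 1; 0] 3;
  Cert 5 [:: 15; 22; 24; 24; 24; 24; 35; 35; 37; 37; 38] [:: 3; 3; 2; 1; 1; 1] 5;
  Cert 5 [:: 15; 22; 24; 24; 24; 24; 35; 35; 37; 37; 38] [:: 3; 3; 2; 1; 1; 1] 5;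
  Cert 1 [:: 15; 48] [:: 3; 2; 2; 1; 1; 1] 5;
  Cert 2 [:: 15; 22; 25; 32; 32] [:: 4; 2; 1; 1; 1; 1] 4;
  Cert 2 [:: 14; 22; 24; 33; 33] [:: 2; 1; 1; 1; 0; 0] 2;
  Cert 2 [:: 14; 22; 24; 33; 33] [:: 2; 1; 1; 1; 0; 0] 2;
  Cert 4 [:: 15; 22; 25; 25; 25; 34; 34; 36; 36] [:: 3; 2; 1; 1; 1; 1] 4;
  Cert 4 [:: 15; 22; 25; 25; 25; 34; 34; 36; 36] [:: 3; 2; 1; 1; 1; 1] 4;
  Cert 1 [:: 15; 48] [:: 3; 1; 1; 1; 1; 1] 4;
  Cert 2 [:: 12; 20; 24; 35; 35] [:: 2; 1; 1; 1; 0; 0] 2;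
  Cert 4 [:: 14; 22; 24; 25; 25; 35; 35; 36; 36] [:: 3; 2; 2; 1; 1; 0] 4;
  Cert 6 [:: 15; 22; 22; 22; 25; 25; 25; 35; 35; 36; 36; 40; 40] [:: 4; 3; 2; 2; 1; 1] 6;
  Cert 1 [:: 15; 48] [:: 2; 1; 1; 1; 1; 0] 3;
  Cert 4 [:: 14; 22; 24; 24; 24; 35; 35; 37; 37] [:: 3; 2; 2; 1; 1; 0] 4;
  Cert 8 [:: 15; 22; 22; 22; 22; 22; 25; 25; 25; 35; 35; 37; 37; 40; 40; 40; 40] [:: 5; 4; 3; 2; 2; 1] 8;
  Cert 1 [:: 15; 48] [:: 2; 1; 1; 1; 1; 0] 3;
  Cert 1 [:: 22; 41] [:: 1; 1; 0; 0; 0; 0] 1;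
  Cert 1 [:: 15; 48] [:: 2; 1; 1; 1; 1; 0] 3;
  Cert 1 [:: 14; 49] [:: 2; 1; 1; 1; 1; 0] 3;
  Cert 1 [:: 25; 38] [:: 1; 1; 0; 0; 0; 0] 1;
  Cert 1 [:: 25; 38] [:: 1; 1; 0; 0; 0; 0] 1;
  Cert 1 [:: 15; 48] [:: 3; 2; 2; 1; 1; 1] 5;
  Cert 1 [:: 25; 38] [:: 1; 1; 0; 0; 0; 0] 1;
  Cert 1 [:: 15; 48] [:: 2; 2; 1; 1; 1; 1] 4;
  Cert 1 [:: 14; 49] [:: 1; 1; 1; 1; 0; 0] 2;
  Cert 2 [:: 15; 22; 25; 32; 32] [:: 4; 2; 1; 1; 1; 1] 4;
  Cert 2 [:: 14; 22; 24; 33; 33] [:: 2; 1; 1; 1; 0; 0] 2;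
  Cert 2 [:: 14; 22; 24; 33; 33] [:: 2; 1; 1; 1; 0; 0] 2;
  Cert 4 [:: 15; 22; 25; 26; 26; 33; 33; 36; 36] [:: 3; 2; 1; 1; 1; 1] 4;
  Cert 4 [:: 15; 22; 25; 26; 26; 33; 33; 36; 36] [:: 3; 2; 1; 1; 1; 1] 4;
  Cert 1 [:: 15; 48] [:: 3; 1; 1; 1; 1; 1] 4;
  Cert 2 [:: 12; 20; 24; 35; 35] [:: 2; 1; 1; 1; 0; 0] 2;
  Cert 6 [:: 15; 22; 25; 25; 25; 26; 26; 35; 35; 36; 36; 36; 36] [:: 4; 3; 2; 2; 1; 1] 6;
  Cert 6 [:: 15; 22; 25; 25; 25; 26; 26; 35; 35; 36; 36; 36; 36] [:: 4; 3; 2; 2; 1; 1] 6;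
  Cert 1 [:: 15; 48] [:: 2; 1; 1; 1; 1; 0] 3;
  Cert 1 [:: 26; 37] [:: 1; 1; 0; 0; 0; 0] 1;
  Cert 1 [:: 26; 37] [:: 1; 1; 0; 0; 0; 0] 1;
  Cert 1 [:: 15; 48] [:: 2; 1; 1; 1; 1; 0] 3;
  Cert 1 [:: 26; 37] [:: 1; 1; 0; 0; 0; 0] 1;
  Cert 1 [:: 15; 48] [:: 2; 1; 1; 1; 1; 0] 3;
  Cert 1 [:: 14; 49] [:: 2; 1; 1; 1; 1; 0] 3;
  Cert 1 [:: 26; 37] [:: 1; 1; 0; 0; 0; 0] 1;
  Cert 1 [:: 26; 37] [:: 1; 1; 0; 0; 0; 0] 1;
  Cert 1 [:: 15; 48] [:: 3; 2; 2; 1; 1; 1] 5;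
  Cert 1 [:: 26; 37] [:: 1; 1; 0; 0; 0; 0] 1;
  Cert 1 [:: 15; 48] [:: 2; 2; 1; 1; 1; 1] 4;
  Cert 1 [:: 14; 49] [:: 1; 1; 1; 1; 0; 0] 2;
  Cert 1 [:: 26; 37] [:: 1; 1; 0; 0; 0; 0] 1;
  Cert 1 [:: 15; 48] [:: 2; 2; 1; 1; 1; 1] 4;
  Cert 1 [:: 14; 49] [:: 1; 1; 1; 1; 0; 0] 2;
  Cert 1 [:: 14; 49] [:: 1; 1; 1; 1; 0; 0] 2;
  Cert 2 [:: 15; 22; 25; 32; 32] [:: 4; 2; 1; 1; 1; 1] 4;
  Cert 3 [:: 14; 22; 26; 28; 33; 33; 33] [:: 3; 1; 1; 1; 1; 0] 3;
  Cert 4 [:: 15; 22; 26; 28; 28; 33; 33; 33; 34] [:: 3; 2; 1; 1; 1; 1] 4;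
  Cert 4 [:: 15; 22; 26; 28; 28; 33; 33; 33; 34] [:: 3; 2; 1; 1; 1; 1] 4;
  Cert 4 [:: 15; 22; 26; 28; 28; 33; 33; 33; 34] [:: 3; 2; 1; 1; 1; 1] 4;
  Cert 1 [:: 15; 48] [:: 3; 1; 1; 1; 1; 1] 4;
  Cert 1 [:: 28; 35] [:: 1; 1; 0; 0; 0; 0] 1;
  Cert 1 [:: 28; 35] [:: 1; 1; 0; 0; 0; 0] 1;
  Cert 1 [:: 28; 35] [:: 1; 1; 0; 0; 0; 0] 1;
  Cert 1 [:: 15; 48] [:: 2; 1; 1; 1; 1; 0] 3;
  Cert 1 [:: 28; 35] [:: 1; 1; 0; 0; 0; 0] 1;
  Cert 1 [:: 28; 35] [:: 1; 1; 0; 0; 0; 0] 1;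
  Cert 1 [:: 15; 48] [:: 2; 1; 1; 1; 1; 0] 3;
  Cert 1 [:: 28; 35] [:: 1; 1; 0; 0; 0; 0] 1;
  Cert 1 [:: 15; 48] [:: 2; 1; 1; 1; 1; 0] 3;
  Cert 1 [:: 14; 49] [:: 2; 1; 1; 1; 1; 0] 3;
  Cert 1 [:: 28; 35] [:: 1; 1; 0; 0; 0; 0] 1;
  Cert 1 [:: 28; 35] [:: 1; 1; 0; 0; 0; 0] 1;
  Cert 1 [:: 15; 48] [:: 3; 2; 2; 1; 1; 1] 5;
  Cert 1 [:: 28; 35] [:: 1; 1; 0; 0; 0; 0] 1;
  Cert 1 [:: 15; 48] [:: 2; 2; 1; 1; 1; 1] 4;
  Cert 8 [:: 15; 15; 15; 26; 26; 28; 28; 38; 38; 38; 41; 49; 49; 49; 49] [:: 4; 3; 3; 2; 2; 1] 8;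
  Cert 1 [:: 28; 35] [:: 1; 1; 0; 0; 0; 0] 1;
  Cert 1 [:: 15; 48] [:: 2; 2; 1; 1; 1; 1] 4;
  Cert 7 [:: 15; 15; 15; 22; 28; 28; 38; 42; 42; 49; 49; 49; 49] [:: 3; 3; 2; 2; 2; 1] 7;
  Cert 6 [:: 15; 15; 15; 28; 28; 38; 42; 49; 49; 49; 50] [:: 3; 2; 2; 2; 1; 1] 6;
  Cert 1 [:: 28; 35] [:: 1; 1; 0; 0; 0; 0] 1;
  Cert 1 [:: 15; 48] [:: 2; 2; 1; 1; 1; 1] 4;
  Cert 7 [:: 15; 15; 15; 22; 22; 26; 42; 44; 44; 49; 49; 49; 49] [:: 3; 3; 2; 2; 2; 1] 7;
  Cert 5 [:: 15; 15; 15; 28; 44; 49; 49; 50; 50] [:: 2; 2; 2; 1; 1; 1] 5;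
  Cert 5 [:: 15; 15; 15; 28; 44; 49; 49; 50; 50] [:: 2; 2; 2; 1; 1; 1] 5;
  Cert 4 [:: 15; 15; 15; 49; 50; 52; 56] [:: 2; 1; 1; 1; 1; 1] 4;
  Cert 1 [:: 8; 23; 32] [:: 1; 1; 1; 0; 0; 0] 1;
  Cert 1 [:: 8; 22; 33] [:: 1; 1; 1; 0; 0; 0] 1;
  Cert 1 [:: 8; 22; 33] [:: 1; 1; 1; 0; 0; 0] 1;
  Cert 1 [:: 8; 22; 33] [:: 1; 1; 1; 0; 0; 0] 1;
  Cert 1 [:: 8; 20; 35] [:: 1; 1; 1; 0; 0; 0] 1;
  Cert 1 [:: 8; 20; 35] [:: 1; 1; 1; 0; 0; 0] 1;
  Cert 1 [:: 8; 20; 35] [:: 1; 1; 1; 0; 0; 0] 1;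
  Cert 1 [:: 8; 20; 35] [:: 1; 1; 1; 0; 0; 0] 1;
  Cert 1 [:: 8; 16; 39] [:: 1; 1; 1; 0; 0; 0] 1;
  Cert 2 [:: 15; 23; 24; 32; 32] [:: 2; 1; 1; 1; 0; 0] 2;
  Cert 2 [:: 14; 22; 24; 33; 33] [:: 2; 1; 1; 1; 0; 0] 2;
  Cert 2 [:: 14; 22; 24; 33; 33] [:: 2; 1; 1; 1; 0; 0] 2;
  Cert 3 [:: 15; 23; 24; 24; 33; 34; 36] [:: 5; 3; 3; 1; 1; 1] 6;
  Cert 1 [:: 23; 40] [:: 1; 1; 0; 0; 0; 0] 1;
  Cert 1 [:: 15; 48] [:: 3; 1; 1; 1; 1; 1] 4;
  Cert 2 [:: 12; 20; 24; 35; 35] [:: 2; 1; 1; 1; 0; 0] 2;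
  Cert 4 [:: 15; 23; 24; 24; 24; 35; 35; 36; 36] [:: 3; 2; 2; 1; 1; 0] 4;
  Cert 1 [:: 23; 40] [:: 1; 1; 0; 0; 0; 0] 1;
  Cert 1 [:: 15; 48] [:: 2; 1; 1; 1; 1; 0] 3;
  Cert 4 [:: 14; 22; 24; 24; 24; 35; 35; 37; 37] [:: 3; 2; 2; 1; 1; 0] 4;
  Cert 1 [:: 23; 40] [:: 1; 1; 0; 0; 0; 0] 1;
  Cert 1 [:: 15; 48] [:: 2; 1; 1; 1; 1; 0] 3;
  Cert 6 [:: 15; 23; 24; 24; 24; 24; 24; 35; 35; 37; 37; 38; 38] [:: 4; 3; 3; 1; 1; 1] 6;
  Cert 1 [:: 23; 40] [:: 1; 1; 0; 0; 0; 0] 1;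
  Cert 1 [:: 15; 48] [:: 3; 2; 2; 1; 1; 1] 5;
  Cert 1 [:: 24; 39] [:: 1; 1; 0; 0; 0; 0] 1;
  Cert 1 [:: 24; 39] [:: 1; 1; 0; 0; 0; 0] 1;
  Cert 1 [:: 15; 48] [:: 1; 1; 1; 1; 0; 0] 2;
  Cert 2 [:: 14; 23; 25; 32; 32] [:: 2; 1; 1; 1; 0; 0] 2;
  Cert 2 [:: 14; 22; 24; 33; 33] [:: 2; 1; 1; 1; 0; 0] 2;
  Cert 2 [:: 14; 22; 24; 33; 33] [:: 2; 1; 1; 1; 0; 0] 2;
  Cert 4 [:: 14; 23; 25; 25; 25; 34; 34; 36; 36] [:: 3; 2; 2; 1; 1; 0] 4;
  Cert 1 [:: 23; 40] [:: 1; 1; 0; 0; 0; 0] 1;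
  Cert 1 [:: 15; 48] [:: 3; 1; 1; 1; 1; 1] 4;
  Cert 2 [:: 12; 20; 24; 35; 35] [:: 2; 1; 1; 1; 0; 0] 2;
  Cert 4 [:: 14; 22; 24; 25; 25; 35; 35; 36; 36] [:: 3; 2; 2; 1; 1; 0] 4;
  Cert 1 [:: 23; 40] [:: 1; 1; 0; 0; 0; 0] 1;
  Cert 1 [:: 15; 48] [:: 2; 1; 1; 1; 1; 0] 3;
  Cert 4 [:: 14; 22; 24; 24; 24; 35; 35; 37; 37] [:: 3; 2; 2; 1; 1; 0] 4;
  Cert 1 [:: 23; 40] [:: 1; 1; 0; 0; 0; 0] 1;
  Cert 1 [:: 15; 48] [:: 2; 1; 1; 1; 1; 0] 3;
  Cert 1 [:: 22; 41] [:: 1; 1; 0; 0; 0; 0] 1;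
  Cert 1 [:: 15; 48] [:: 2; 1; 1; 1; 1; 0] 3;
  Cert 1 [:: 14; 49] [:: 2; 1; 1; 1; 1; 0] 3;
  Cert 1 [:: 25; 38] [:: 1; 1; 0; 0; 0; 0] 1;
  Cert 1 [:: 25; 38] [:: 1; 1; 0; 0; 0; 0] 1;
  Cert 1 [:: 15; 48] [:: 3; 2; 2; 1; 1; 1] 5;
  Cert 1 [:: 25; 38] [:: 1; 1; 0; 0; 0; 0] 1;
  Cert 1 [:: 22; 41] [:: 1; 1; 1; 1; 0; 0] 2;
  Cert 1 [:: 14; 49] [:: 1; 1; 1; 1; 0; 0] 2;
  Cert 1 [:: 24; 39] [:: 1; 1; 0; 0; 0; 0] 1;
  Cert 1 [:: 24; 39] [:: 1; 1; 0; 0; 0; 0] 1;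
  Cert 1 [:: 15; 48] [:: 1; 1; 1; 1; 0; 0] 2;
  Cert 1 [:: 24; 39] [:: 1; 1; 0; 0; 0; 0] 1;
  Cert 1 [:: 15; 48] [:: 1; 1; 1; 1; 0; 0] 2;
  Cert 1 [:: 14; 49] [:: 1; 1; 1; 1; 0; 0] 2;
  Cert 2 [:: 14; 23; 25; 32; 32] [:: 2; 1; 1; 1; 0; 0] 2;
  Cert 2 [:: 14; 22; 24; 33; 33] [:: 2; 1; 1; 1; 0; 0] 2;
  Cert 2 [:: 14; 22; 24; 33; 33] [:: 2; 1; 1; 1; 0; 0] 2;
  Cert 5 [:: 15; 23; 25; 26; 26; 26; 33; 33; 36; 36; 36] [:: 4; 2; 2; 1; 1; 1] 5;
  Cert 1 [:: 23; 40] [:: 1; 1; 0; 0; 0; 0] 1;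
  Cert 1 [:: 15; 48] [:: 3; 1; 1; 1; 1; 1] 4;
  Cert 2 [:: 12; 20; 24; 35; 35] [:: 2; 1; 1; 1; 0; 0] 2;
  Cert 7 [:: 15; 23; 25; 25; 25; 26; 26; 26; 35; 35; 36; 36; 36; 36; 36] [:: 5; 3; 3; 2; 1; 1] 7;
  Cert 1 [:: 23; 40] [:: 1; 1; 0; 0; 0; 0] 1;
  Cert 1 [:: 15; 48] [:: 2; 1; 1; 1; 1; 0] 3;
  Cert 1 [:: 26; 37] [:: 1; 1; 0; 0; 0; 0] 1;
  Cert 1 [:: 26; 37] [:: 1; 1; 0; 0; 0; 0] 1;
  Cert 1 [:: 15; 48] [:: 2; 1; 1; 1; 1; 0] 3;
  Cert 1 [:: 26; 37] [:: 1; 1; 0; 0; 0; 0] 1;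
  Cert 1 [:: 15; 48] [:: 2; 1; 1; 1; 1; 0] 3;
  Cert 1 [:: 14; 49] [:: 2; 1; 1; 1; 1; 0] 3;
  Cert 1 [:: 26; 37] [:: 1; 1; 0; 0; 0; 0] 1;
  Cert 1 [:: 26; 37] [:: 1; 1; 0; 0; 0; 0] 1;
  Cert 1 [:: 15; 48] [:: 3; 2; 2; 1; 1; 1] 5;
  Cert 1 [:: 26; 37] [:: 1; 1; 0; 0; 0; 0] 1;
  Cert 1 [:: 22; 41] [:: 1; 1; 1; 1; 0; 0] 2;
  Cert 1 [:: 14; 49] [:: 1; 1; 1; 1; 0; 0] 2;
  Cert 1 [:: 26; 37] [:: 1; 1; 0; 0; 0; 0] 1;
  Cert 1 [:: 22; 41] [:: 1; 1; 1; 1; 0; 0] 2;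
  Cert 1 [:: 14; 49] [:: 1; 1; 1; 1; 0; 0] 2;
  Cert 1 [:: 14; 49] [:: 1; 1; 1; 1; 0; 0] 2;
  Cert 1 [:: 24; 39] [:: 1; 1; 0; 0; 0; 0] 1;
  Cert 1 [:: 24; 39] [:: 1; 1; 0; 0; 0; 0] 1;
  Cert 1 [:: 15; 48] [:: 1; 1; 1; 1; 0; 0] 2;
  Cert 1 [:: 24; 39] [:: 1; 1; 0; 0; 0; 0] 1;
  Cert 1 [:: 15; 48] [:: 1; 1; 1; 1; 0; 0] 2;
  Cert 1 [:: 14; 49] [:: 1; 1; 1; 1; 0; 0] 2;
  Cert 1 [:: 24; 39] [:: 1; 1; 0; 0; 0; 0] 1;
  Cert 1 [:: 15; 48] [:: 1; 1; 1; 1; 0; 0] 2;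
  Cert 1 [:: 14; 49] [:: 1; 1; 1; 1; 0; 0] 2;
  Cert 1 [:: 14; 49] [:: 1; 1; 1; 1; 0; 0] 2;
  Cert 5 [:: 15; 15; 23; 23; 25; 26; 28; 32; 32; 32; 32; 32] [:: 5; 2; 2; 1; 1; 1] 5;
  Cert 3 [:: 14; 22; 26; 28; 33; 33; 33] [:: 3; 1; 1; 1; 1; 0] 3;
  Cert 5 [:: 15; 23; 26; 28; 28; 28; 33; 33; 33; 34; 34] [:: 4; 2; 2; 1; 1; 1] 5;
  Cert 5 [:: 15; 23; 26; 28; 28; 28; 33; 33; 33; 34; 34] [:: 4; 2; 2; 1; 1; 1] 5;
  Cert 1 [:: 23; 40] [:: 1; 1; 0; 0; 0; 0] 1;
  Cert 1 [:: 15; 48] [:: 3; 1; 1; 1; 1; 1] 4;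
  Cert 1 [:: 28; 35] [:: 1; 1; 0; 0; 0; 0] 1;
  Cert 1 [:: 28; 35] [:: 1; 1; 0; 0; 0; 0] 1;
  Cert 1 [:: 28; 35] [:: 1; 1; 0; 0; 0; 0] 1;
  Cert 1 [:: 15; 48] [:: 2; 1; 1; 1; 1; 0] 3;
  Cert 1 [:: 28; 35] [:: 1; 1; 0; 0; 0; 0] 1;
  Cert 1 [:: 28; 35] [:: 1; 1; 0; 0; 0; 0] 1;
  Cert 1 [:: 15; 48] [:: 2; 1; 1; 1; 1; 0] 3;
  Cert 1 [:: 28; 35] [:: 1; 1; 0; 0; 0; 0] 1;
  Cert 1 [:: 15; 48] [:: 2; 1; 1; 1; 1; 0] 3;
  Cert 1 [:: 14; 49] [:: 2; 1; 1; 1; 1; 0] 3;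
  Cert 1 [:: 28; 35] [:: 1; 1; 0; 0; 0; 0] 1;
  Cert 1 [:: 28; 35] [:: 1; 1; 0; 0; 0; 0] 1;
  Cert 1 [:: 15; 48] [:: 3; 2; 2; 1; 1; 1] 5;
  Cert 1 [:: 28; 35] [:: 1; 1; 0; 0; 0; 0] 1;
  Cert 9 [:: 23; 23; 23; 23; 26; 26; 28; 28; 38; 38; 38; 41; 41; 41; 41; 41; 48] [:: 5; 4; 3; 2; 2; 1] 9;
  Cert 8 [:: 15; 15; 15; 26; 26; 28; 28; 38; 38; 38; 41; 49; 49; 49; 49] [:: 4; 3; 3; 2; 2; 1] 8;
  Cert 1 [:: 28; 35] [:: 1; 1; 0; 0; 0; 0] 1;
  Cert 7 [:: 23; 23; 23; 23; 28; 28; 38; 41; 41; 41; 42; 42; 48] [:: 4; 3; 2; 2; 1; 1] 7;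
  Cert 6 [:: 15; 15; 23; 28; 28; 38; 42; 42; 49; 49; 49] [:: 3; 2; 2; 2; 1; 1] 6;
  Cert 6 [:: 15; 15; 23; 28; 28; 38; 42; 42; 49; 49; 49] [:: 3; 2; 2; 2; 1; 1] 6;
  Cert 1 [:: 28; 35] [:: 1; 1; 0; 0; 0; 0] 1;
  Cert 6 [:: 23; 23; 23; 23; 25; 41; 42; 42; 44; 44; 48] [:: 3; 3; 2; 1; 1; 1] 6;
  Cert 5 [:: 23; 23; 23; 25; 42; 42; 44; 44; 49] [:: 2; 2; 2; 1; 1; 1] 5;
  Cert 5 [:: 23; 23; 23; 25; 42; 42; 44; 44; 49] [:: 2; 2; 2; 1; 1; 1] 5;
  Cert 5 [:: 23; 23; 23; 25; 42; 42; 44; 44; 49] [:: 2; 2; 2; 1; 1; 1] 5;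
  Cert 4 [:: 15; 23; 23; 42; 44; 49; 56] [:: 2; 1; 1; 1; 1; 1] 4;
  Cert 1 [:: 24; 39] [:: 1; 1; 0; 0; 0; 0] 1;
  Cert 1 [:: 24; 39] [:: 1; 1; 0; 0; 0; 0] 1;
  Cert 7 [:: 25; 25; 26; 26; 28; 28; 39; 39; 39; 39; 39; 40; 48] [:: 4; 3; 3; 1; 1; 1] 7;
  Cert 1 [:: 24; 39] [:: 1; 1; 0; 0; 0; 0] 1;
  Cert 6 [:: 23; 26; 26; 28; 28; 39; 39; 39; 41; 41; 48] [:: 3; 3; 2; 1; 1; 1] 6;
  Cert 5 [:: 26; 26; 28; 28; 39; 39; 39; 41; 49] [:: 3; 2; 2; 1; 1; 0] 5;
  Cert 1 [:: 24; 39] [:: 1; 1; 0; 0; 0; 0] 1;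
  Cert 6 [:: 23; 23; 23; 28; 28; 39; 41; 41; 42; 42; 48] [:: 3; 3; 2; 1; 1; 1] 6;
  Cert 5 [:: 15; 23; 28; 28; 39; 42; 42; 49; 49] [:: 2; 2; 2; 1; 1; 1] 5;
  Cert 5 [:: 15; 23; 28; 28; 39; 42; 42; 49; 49] [:: 2; 2; 2; 1; 1; 1] 5;
  Cert 1 [:: 24; 39] [:: 1; 1; 0; 0; 0; 0] 1;
  Cert 6 [:: 23; 23; 23; 23; 25; 41; 42; 42; 44; 44; 48] [:: 3; 3; 2; 1; 1; 1] 6;
  Cert 5 [:: 23; 23; 23; 25; 42; 42; 44; 44; 49] [:: 2; 2; 2; 1; 1; 1] 5;
  Cert 5 [:: 23; 23; 23; 25; 42; 42; 44; 44; 49] [:: 2; 2; 2; 1; 1; 1] 5;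
  Cert 5 [:: 23; 23; 23; 25; 42; 42; 44; 44; 49] [:: 2; 2; 2; 1; 1; 1] 5;
  Cert 3 [:: 15; 23; 39; 56; 56] [:: 1; 1; 1; 1; 0; 1] 3;
  Cert 2 [:: 12; 23; 27; 32; 32] [:: 2; 1; 1; 1; 0; 0] 2;
  Cert 2 [:: 12; 22; 26; 33; 33] [:: 2; 1; 1; 1; 0; 0] 2;
  Cert 2 [:: 12; 22; 26; 33; 33] [:: 2; 1; 1; 1; 0; 0] 2;
  Cert 1 [:: 27; 36] [:: 1; 1; 0; 0; 0; 0] 1;
  Cert 1 [:: 27; 36] [:: 1; 1; 0; 0; 0; 0] 1;
  Cert 1 [:: 15; 48] [:: 3; 1; 1; 1; 1; 1] 4;
  Cert 2 [:: 12; 20; 24; 35; 35] [:: 2; 1; 1; 1; 0; 0] 2;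
  Cert 1 [:: 27; 36] [:: 1; 1; 0; 0; 0; 0] 1;
  Cert 1 [:: 27; 36] [:: 1; 1; 0; 0; 0; 0] 1;
  Cert 1 [:: 15; 48] [:: 2; 1; 1; 1; 1; 0] 3;
  Cert 1 [:: 26; 37] [:: 1; 1; 0; 0; 0; 0] 1;
  Cert 1 [:: 26; 37] [:: 1; 1; 0; 0; 0; 0] 1;
  Cert 1 [:: 15; 48] [:: 2; 1; 1; 1; 1; 0] 3;
  Cert 1 [:: 26; 37] [:: 1; 1; 0; 0; 0; 0] 1;
  Cert 1 [:: 15; 48] [:: 2; 1; 1; 1; 1; 0] 3;
  Cert 1 [:: 14; 49] [:: 2; 1; 1; 1; 1; 0] 3;
  Cert 1 [:: 26; 37] [:: 1; 1; 0; 0; 0; 0] 1;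
  Cert 1 [:: 26; 37] [:: 1; 1; 0; 0; 0; 0] 1;
  Cert 1 [:: 25; 38] [:: 1; 1; 1; 1; 0; 0] 2;
  Cert 1 [:: 26; 37] [:: 1; 1; 0; 0; 0; 0] 1;
  Cert 1 [:: 22; 41] [:: 1; 1; 1; 1; 0; 0] 2;
  Cert 1 [:: 14; 49] [:: 1; 1; 1; 1; 0; 0] 2;
  Cert 1 [:: 26; 37] [:: 1; 1; 0; 0; 0; 0] 1;
  Cert 1 [:: 22; 41] [:: 1; 1; 1; 1; 0; 0] 2;
  Cert 1 [:: 14; 49] [:: 1; 1; 1; 1; 0; 0] 2;
  Cert 1 [:: 14; 49] [:: 1; 1; 1; 1; 0; 0] 2;
  Cert 1 [:: 24; 39] [:: 1; 1; 0; 0; 0; 0] 1;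
  Cert 1 [:: 24; 39] [:: 1; 1; 0; 0; 0; 0] 1;
  Cert 1 [:: 15; 48] [:: 1; 1; 1; 1; 0; 0] 2;
  Cert 1 [:: 24; 39] [:: 1; 1; 0; 0; 0; 0] 1;
  Cert 1 [:: 15; 48] [:: 1; 1; 1; 1; 0; 0] 2;
  Cert 1 [:: 14; 49] [:: 1; 1; 1; 1; 0; 0] 2;
  Cert 1 [:: 24; 39] [:: 1; 1; 0; 0; 0; 0] 1;
  Cert 1 [:: 15; 48] [:: 1; 1; 1; 1; 0; 0] 2;
  Cert 1 [:: 14; 49] [:: 1; 1; 1; 1; 0; 0] 2;
  Cert 1 [:: 14; 49] [:: 1; 1; 1; 1; 0; 0] 2;
  Cert 1 [:: 24; 39] [:: 1; 1; 0; 0; 0; 0] 1;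
  Cert 1 [:: 15; 48] [:: 1; 1; 1; 1; 0; 0] 2;
  Cert 1 [:: 14; 49] [:: 1; 1; 1; 1; 0; 0] 2;
  Cert 1 [:: 14; 49] [:: 1; 1; 1; 1; 0; 0] 2;
  Cert 1 [:: 12; 51] [:: 1; 1; 1; 1; 0; 0] 2;
  Cert 3 [:: 15; 23; 27; 28; 32; 32; 32] [:: 3; 1; 1; 1; 1; 0] 3;
  Cert 3 [:: 14; 22; 26; 28; 33; 33; 33] [:: 3; 1; 1; 1; 1; 0] 3;
  Cert 6 [:: 15; 23; 27; 28; 28; 28; 28; 33; 33; 33; 34; 34; 34] [:: 5; 2; 2; 2; 1; 1] 6;
  Cert 1 [:: 27; 36] [:: 1; 1; 0; 0; 0; 0] 1;
  Cert 1 [:: 27; 36] [:: 1; 1; 0; 0; 0; 0] 1;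
  Cert 1 [:: 15; 48] [:: 3; 1; 1; 1; 1; 1] 4;
  Cert 1 [:: 28; 35] [:: 1; 1; 0; 0; 0; 0] 1;
  Cert 1 [:: 28; 35] [:: 1; 1; 0; 0; 0; 0] 1;
  Cert 1 [:: 28; 35] [:: 1; 1; 0; 0; 0; 0] 1;
  Cert 1 [:: 15; 48] [:: 2; 1; 1; 1; 1; 0] 3;
  Cert 1 [:: 28; 35] [:: 1; 1; 0; 0; 0; 0] 1;
  Cert 1 [:: 28; 35] [:: 1; 1; 0; 0; 0; 0] 1;
  Cert 1 [:: 15; 48] [:: 2; 1; 1; 1; 1; 0] 3;
  Cert 1 [:: 28; 35] [:: 1; 1; 0; 0; 0; 0] 1;
  Cert 1 [:: 15; 48] [:: 2; 1; 1; 1; 1; 0] 3;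
  Cert 1 [:: 14; 49] [:: 2; 1; 1; 1; 1; 0] 3;
  Cert 1 [:: 28; 35] [:: 1; 1; 0; 0; 0; 0] 1;
  Cert 1 [:: 28; 35] [:: 1; 1; 0; 0; 0; 0] 1;
  Cert 8 [:: 27; 27; 27; 27; 27; 28; 28; 37; 37; 37; 38; 38; 38; 40; 48] [:: 5; 3; 3; 2; 1; 1] 8;
  Cert 1 [:: 28; 35] [:: 1; 1; 0; 0; 0; 0] 1;
  Cert 7 [:: 23; 23; 27; 27; 28; 28; 38; 38; 38; 41; 41; 41; 48] [:: 4; 3; 2; 2; 1; 1] 7;
  Cert 6 [:: 15; 27; 27; 28; 28; 38; 38; 38; 41; 49; 49] [:: 3; 2; 2; 2; 1; 1] 6;
  Cert 1 [:: 28; 35] [:: 1; 1; 0; 0; 0; 0] 1;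
  Cert 7 [:: 23; 23; 27; 27; 28; 28; 38; 38; 38; 41; 41; 41; 48] [:: 4; 3; 2; 2; 1; 1] 7;
  Cert 6 [:: 15; 27; 27; 28; 28; 38; 38; 38; 41; 49; 49] [:: 3; 2; 2; 2; 1; 1] 6;
  Cert 6 [:: 15; 27; 27; 28; 28; 38; 38; 38; 41; 49; 49] [:: 3; 2; 2; 2; 1; 1] 6;
  Cert 1 [:: 28; 35] [:: 1; 1; 0; 0; 0; 0] 1;
  Cert 5 [:: 23; 23; 27; 27; 38; 41; 44; 44; 48] [:: 3; 2; 1; 1; 1; 1] 5;
  Cert 4 [:: 23; 27; 27; 38; 44; 44; 49] [:: 2; 1; 1; 1; 1; 1] 4;
  Cert 4 [:: 23; 27; 27; 38; 44; 44; 49] [:: 2; 1; 1; 1; 1; 1] 4;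
  Cert 4 [:: 23; 27; 27; 38; 44; 44; 49] [:: 2; 1; 1; 1; 1; 1] 4;
  Cert 4 [:: 23; 27; 27; 38; 44; 44; 49] [:: 2; 1; 1; 1; 1; 1] 4;
  Cert 1 [:: 24; 39] [:: 1; 1; 0; 0; 0; 0] 1;
  Cert 1 [:: 24; 39] [:: 1; 1; 0; 0; 0; 0] 1;
  Cert 5 [:: 27; 27; 28; 28; 39; 39; 39; 40; 48] [:: 3; 2; 2; 1; 1; 0] 5;
  Cert 1 [:: 24; 39] [:: 1; 1; 0; 0; 0; 0] 1;
  Cert 5 [:: 26; 27; 28; 28; 39; 39; 39; 41; 48] [:: 3; 2; 2; 1; 1; 0] 5;
  Cert 5 [:: 26; 26; 28; 28; 39; 39; 39; 41; 49] [:: 3; 2; 2; 1; 1; 0] 5;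
  Cert 1 [:: 24; 39] [:: 1; 1; 0; 0; 0; 0] 1;
  Cert 9 [:: 27; 27; 27; 28; 28; 28; 28; 39; 39; 39; 39; 39; 41; 42; 48; 48] [:: 5; 4; 3; 2; 1; 1] 9;
  Cert 4 [:: 27; 28; 28; 39; 39; 42; 49] [:: 4; 3; 3; 2; 1; 1] 8;
  Cert 4 [:: 27; 28; 28; 39; 39; 42; 49] [:: 4; 3; 3; 2; 1; 1] 8;
  Cert 1 [:: 24; 39] [:: 1; 1; 0; 0; 0; 0] 1;
  Cert 4 [:: 23; 27; 27; 39; 44; 44; 48] [:: 2; 2; 1; 1; 1; 0] 4;
  Cert 4 [:: 22; 27; 27; 39; 44; 44; 49] [:: 2; 2; 1; 1; 1; 0] 4;
  Cert 7 [:: 23; 23; 27; 27; 27; 39; 44; 44; 44; 44; 49; 50] [:: 3; 3; 2; 2; 1; 1] 7;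
  Cert 3 [:: 27; 27; 39; 44; 52] [:: 3; 2; 2; 1; 1; 1] 6;
  Cert 3 [:: 15; 23; 39; 56; 56] [:: 1; 1; 1; 1; 0; 1] 3;
  Cert 1 [:: 24; 39] [:: 1; 1; 0; 0; 0; 0] 1;
  Cert 4 [:: 23; 28; 28; 39; 43; 43; 48] [:: 2; 2; 1; 1; 1; 0] 4;
  Cert 4 [:: 22; 28; 28; 39; 43; 43; 49] [:: 2; 2; 1; 1; 1; 0] 4;
  Cert 7 [:: 23; 28; 28; 28; 28; 39; 39; 43; 43; 43; 49; 50] [:: 3; 3; 2; 2; 1; 1] 7;
  Cert 3 [:: 28; 28; 39; 43; 51] [:: 2; 1; 1; 1; 0; 0] 3;
  Cert 1 [:: 24; 39] [:: 1; 1; 0; 0; 0; 0] 1;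
  Cert 4 [:: 23; 23; 27; 43; 44; 44; 48] [:: 2; 2; 1; 1; 1; 0] 4;
  Cert 4 [:: 22; 23; 27; 43; 44; 44; 49] [:: 2; 2; 1; 1; 1; 0] 4;
  Cert 7 [:: 23; 23; 23; 27; 27; 43; 44; 44; 44; 44; 49; 50] [:: 3; 3; 2; 2; 1; 1] 7;
  Cert 3 [:: 15; 27; 43; 52; 52] [:: 1; 1; 1; 1; 1; 0] 3;
  Cert 3 [:: 15; 23; 43; 52; 56] [:: 1; 1; 1; 1; 1; 0] 3;
  Cert 3 [:: 23; 27; 44; 44; 51] [:: 1; 1; 1; 1; 1; 0] 3;
  Cert 3 [:: 23; 27; 44; 44; 51] [:: 1; 1; 1; 1; 1; 0] 3;
  Cert 3 [:: 23; 27; 44; 44; 51] [:: 1; 1; 1; 1; 1; 0] 3;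
  Cert 3 [:: 14; 23; 27; 29; 32; 32; 32] [:: 3; 1; 1; 1; 1; 0] 3;
  Cert 3 [:: 14; 22; 26; 28; 33; 33; 33] [:: 3; 1; 1; 1; 1; 0] 3;
  Cert 1 [:: 29; 34] [:: 1; 1; 0; 0; 0; 0] 1;
  Cert 1 [:: 29; 34] [:: 1; 1; 0; 0; 0; 0] 1;
  Cert 1 [:: 29; 34] [:: 1; 1; 0; 0; 0; 0] 1;
  Cert 1 [:: 15; 48] [:: 3; 1; 1; 1; 1; 1] 4;
  Cert 1 [:: 28; 35] [:: 1; 1; 0; 0; 0; 0] 1;
  Cert 1 [:: 28; 35] [:: 1; 1; 0; 0; 0; 0] 1;
  Cert 1 [:: 28; 35] [:: 1; 1; 0; 0; 0; 0] 1;
  Cert 1 [:: 15; 48] [:: 2; 1; 1; 1; 1; 0] 3;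
  Cert 1 [:: 28; 35] [:: 1; 1; 0; 0; 0; 0] 1;
  Cert 1 [:: 28; 35] [:: 1; 1; 0; 0; 0; 0] 1;
  Cert 1 [:: 15; 48] [:: 2; 1; 1; 1; 1; 0] 3;
  Cert 1 [:: 28; 35] [:: 1; 1; 0; 0; 0; 0] 1;
  Cert 1 [:: 15; 48] [:: 2; 1; 1; 1; 1; 0] 3;
  Cert 1 [:: 14; 49] [:: 2; 1; 1; 1; 1; 0] 3;
  Cert 1 [:: 28; 35] [:: 1; 1; 0; 0; 0; 0] 1;
  Cert 1 [:: 28; 35] [:: 1; 1; 0; 0; 0; 0] 1;
  Cert 6 [:: 27; 27; 27; 29; 29; 37; 38; 38; 38; 40; 48] [:: 4; 2; 2; 1; 1; 1] 6;
  Cert 1 [:: 28; 35] [:: 1; 1; 0; 0; 0; 0] 1;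
  Cert 5 [:: 27; 27; 29; 29; 38; 38; 38; 41; 48] [:: 3; 2; 1; 1; 1; 1] 5;
  Cert 5 [:: 26; 27; 29; 29; 38; 38; 38; 41; 49] [:: 3; 2; 2; 1; 1; 0] 5;
  Cert 1 [:: 28; 35] [:: 1; 1; 0; 0; 0; 0] 1;
  Cert 5 [:: 27; 27; 29; 29; 38; 38; 38; 41; 48] [:: 3; 2; 1; 1; 1; 1] 5;
  Cert 4 [:: 27; 29; 29; 38; 38; 42; 49] [:: 2; 1; 1; 1; 1; 1] 4;
  Cert 4 [:: 27; 29; 29; 38; 38; 42; 49] [:: 2; 1; 1; 1; 1; 1] 4;
  Cert 1 [:: 28; 35] [:: 1; 1; 0; 0; 0; 0] 1;
  Cert 5 [:: 27; 27; 29; 29; 38; 38; 38; 41; 48] [:: 3; 2; 1; 1; 1; 1] 5;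
  Cert 4 [:: 27; 29; 29; 38; 38; 42; 49] [:: 2; 1; 1; 1; 1; 1] 4;
  Cert 4 [:: 27; 29; 29; 38; 38; 42; 49] [:: 2; 1; 1; 1; 1; 1] 4;
  Cert 4 [:: 27; 29; 29; 38; 38; 42; 49] [:: 2; 1; 1; 1; 1; 1] 4;
  Cert 4 [:: 27; 29; 29; 38; 38; 42; 49] [:: 2; 1; 1; 1; 1; 1] 4;
  Cert 1 [:: 24; 39] [:: 1; 1; 0; 0; 0; 0] 1;
  Cert 1 [:: 24; 39] [:: 1; 1; 0; 0; 0; 0] 1;
  Cert 5 [:: 26; 26; 29; 29; 39; 39; 39; 40; 48] [:: 3; 2; 2; 1; 1; 0] 5;
  Cert 1 [:: 24; 39] [:: 1; 1; 0; 0; 0; 0] 1;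
  Cert 5 [:: 26; 26; 28; 29; 39; 39; 39; 41; 48] [:: 3; 2; 2; 1; 1; 0] 5;
  Cert 5 [:: 26; 26; 28; 28; 39; 39; 39; 41; 49] [:: 3; 2; 2; 1; 1; 0] 5;
  Cert 1 [:: 24; 39] [:: 1; 1; 0; 0; 0; 0] 1;
  Cert 4 [:: 26; 29; 29; 39; 39; 42; 48] [:: 2; 2; 1; 1; 1; 0] 4;
  Cert 4 [:: 22; 29; 29; 39; 42; 42; 49] [:: 2; 2; 1; 1; 1; 0] 4;
  Cert 3 [:: 29; 29; 39; 42; 50] [:: 2; 1; 1; 1; 0; 0] 3;
  Cert 1 [:: 24; 39] [:: 1; 1; 0; 0; 0; 0] 1;
  Cert 4 [:: 23; 27; 27; 39; 44; 44; 48] [:: 2; 2; 1; 1; 1; 0] 4;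
  Cert 4 [:: 22; 27; 27; 39; 44; 44; 49] [:: 2; 2; 1; 1; 1; 0] 4;
  Cert 3 [:: 27; 29; 39; 44; 50] [:: 3; 2; 2; 1; 1; 1] 6;
  Cert 3 [:: 27; 29; 39; 44; 50] [:: 3; 2; 2; 1; 1; 1] 6;
  Cert 3 [:: 26; 29; 39; 39; 56] [:: 1; 1; 1; 1; 1; 0] 3;
  Cert 1 [:: 24; 39] [:: 1; 1; 0; 0; 0; 0] 1;
  Cert 4 [:: 22; 28; 29; 39; 43; 43; 48] [:: 2; 2; 1; 1; 1; 0] 4;
  Cert 4 [:: 22; 28; 28; 39; 43; 43; 49] [:: 2; 2; 1; 1; 1; 0] 4;
  Cert 3 [:: 28; 29; 39; 43; 50] [:: 2; 1; 1; 1; 0; 0] 3;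
  Cert 3 [:: 28; 28; 39; 43; 51] [:: 2; 1; 1; 1; 0; 0] 3;
  Cert 1 [:: 24; 39] [:: 1; 1; 0; 0; 0; 0] 1;
  Cert 4 [:: 23; 23; 27; 43; 44; 44; 48] [:: 2; 2; 1; 1; 1; 0] 4;
  Cert 4 [:: 22; 23; 27; 43; 44; 44; 49] [:: 2; 2; 1; 1; 1; 0] 4;
  Cert 3 [:: 28; 29; 39; 43; 50] [:: 1; 1; 1; 1; 1; 0] 3;
  Cert 3 [:: 15; 27; 43; 52; 52] [:: 1; 1; 1; 1; 1; 0] 3;
  Cert 3 [:: 15; 23; 43; 52; 56] [:: 1; 1; 1; 1; 1; 0] 3;
  Cert 3 [:: 23; 27; 44; 44; 51] [:: 1; 1; 1; 1; 1; 0] 3;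
  Cert 3 [:: 23; 27; 44; 44; 51] [:: 1; 1; 1; 1; 1; 0] 3;
  Cert 3 [:: 23; 27; 44; 44; 51] [:: 1; 1; 1; 1; 1; 0] 3;
  Cert 1 [:: 24; 39] [:: 1; 1; 0; 0; 0; 0] 1;
  Cert 4 [:: 22; 22; 27; 43; 45; 45; 48] [:: 2; 2; 1; 1; 1; 0] 4;
  Cert 4 [:: 22; 22; 26; 43; 45; 45; 49] [:: 2; 2; 1; 1; 1; 0] 4;
  Cert 3 [:: 22; 27; 45; 45; 50] [:: 1; 1; 1; 1; 1; 0] 3;
  Cert 3 [:: 22; 27; 45; 45; 50] [:: 1; 1; 1; 1; 1; 0] 3;
  Cert 3 [:: 22; 27; 45; 45; 50] [:: 1; 1; 1; 1; 1; 0] 3;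
  Cert 3 [:: 22; 26; 45; 45; 51] [:: 1; 1; 1; 1; 1; 0] 3;
  Cert 3 [:: 22; 26; 45; 45; 51] [:: 1; 1; 1; 1; 1; 0] 3;
  Cert 3 [:: 22; 26; 45; 45; 51] [:: 1; 1; 1; 1; 1; 0] 3;
  Cert 3 [:: 22; 26; 45; 45; 51] [:: 1; 1; 1; 1; 1; 0] 3;
  Cert 3 [:: 22; 26; 45; 45; 51] [:: 1; 1; 1; 1; 1; 0] 3;
  Cert 3 [:: 22; 26; 45; 45; 51] [:: 1; 1; 1; 1; 1; 0] 3;
  Cert 4 [:: 15; 23; 27; 29; 30; 32; 32; 32; 32] [:: 4; 1; 1; 1; 1; 1] 4;
  Cert 1 [:: 30; 33] [:: 1; 1; 0; 0; 0; 0] 1;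
  Cert 1 [:: 30; 33] [:: 1; 1; 0; 0; 0; 0] 1;
  Cert 1 [:: 30; 33] [:: 1; 1; 0; 0; 0; 0] 1;
  Cert 1 [:: 30; 33] [:: 1; 1; 0; 0; 0; 0] 1;
  Cert 1 [:: 15; 48] [:: 3; 1; 1; 1; 1; 1] 4;
  Cert 1 [:: 28; 35] [:: 1; 1; 0; 0; 0; 0] 1;
  Cert 1 [:: 28; 35] [:: 1; 1; 0; 0; 0; 0] 1;
  Cert 1 [:: 28; 35] [:: 1; 1; 0; 0; 0; 0] 1;
  Cert 7 [:: 29; 29; 29; 30; 30; 30; 35; 35; 35; 35; 36; 40; 48] [:: 5; 2; 2; 2; 1; 1] 7;
  Cert 1 [:: 28; 35] [:: 1; 1; 0; 0; 0; 0] 1;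
  Cert 1 [:: 28; 35] [:: 1; 1; 0; 0; 0; 0] 1;
  Cert 6 [:: 27; 27; 30; 30; 30; 35; 37; 37; 37; 40; 48] [:: 4; 2; 2; 1; 1; 1] 6;
  Cert 1 [:: 28; 35] [:: 1; 1; 0; 0; 0; 0] 1;
  Cert 5 [:: 23; 30; 30; 30; 35; 37; 41; 41; 48] [:: 3; 2; 1; 1; 1; 1] 5;
  Cert 4 [:: 30; 30; 30; 35; 37; 41; 49] [:: 3; 1; 1; 1; 1; 0] 4;
  Cert 1 [:: 28; 35] [:: 1; 1; 0; 0; 0; 0] 1;
  Cert 1 [:: 28; 35] [:: 1; 1; 0; 0; 0; 0] 1;
  Cert 6 [:: 27; 27; 27; 29; 29; 37; 38; 38; 38; 40; 48] [:: 4; 2; 2; 1; 1; 1] 6;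
  Cert 1 [:: 28; 35] [:: 1; 1; 0; 0; 0; 0] 1;
  Cert 5 [:: 27; 27; 29; 29; 38; 38; 38; 41; 48] [:: 3; 2; 1; 1; 1; 1] 5;
  Cert 4 [:: 27; 29; 30; 38; 38; 41; 49] [:: 2; 1; 1; 1; 1; 1] 4;
  Cert 1 [:: 28; 35] [:: 1; 1; 0; 0; 0; 0] 1;
  Cert 5 [:: 27; 27; 29; 29; 38; 38; 38; 41; 48] [:: 3; 2; 1; 1; 1; 1] 5;
  Cert 4 [:: 27; 29; 30; 38; 38; 41; 49] [:: 2; 1; 1; 1; 1; 1] 4;
  Cert 4 [:: 27; 29; 30; 38; 38; 41; 49] [:: 2; 1; 1; 1; 1; 1] 4;
  Cert 1 [:: 28; 35] [:: 1; 1; 0; 0; 0; 0] 1;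
  Cert 5 [:: 27; 27; 29; 29; 38; 38; 38; 41; 48] [:: 3; 2; 1; 1; 1; 1] 5;
  Cert 4 [:: 27; 29; 30; 38; 38; 41; 49] [:: 2; 1; 1; 1; 1; 1] 4;
  Cert 4 [:: 27; 29; 30; 38; 38; 41; 49] [:: 2; 1; 1; 1; 1; 1] 4;
  Cert 4 [:: 27; 29; 30; 38; 38; 41; 49] [:: 2; 1; 1; 1; 1; 1] 4;
  Cert 4 [:: 27; 29; 30; 38; 38; 41; 49] [:: 2; 1; 1; 1; 1; 1] 4;
  Cert 1 [:: 24; 39] [:: 1; 1; 0; 0; 0; 0] 1;
  Cert 1 [:: 24; 39] [:: 1; 1; 0; 0; 0; 0] 1;
  Cert 4 [:: 27; 29; 30; 39; 39; 40; 48] [:: 5; 3; 3; 1; 1; 1] 8;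
  Cert 1 [:: 24; 39] [:: 1; 1; 0; 0; 0; 0] 1;
  Cert 7 [:: 27; 29; 30; 30; 30; 39; 39; 39; 41; 41; 48; 48] [:: 4; 3; 2; 1; 1; 1] 7;
  Cert 3 [:: 30; 30; 39; 41; 49] [:: 2; 1; 1; 1; 0; 0] 3;
  Cert 1 [:: 24; 39] [:: 1; 1; 0; 0; 0; 0] 1;
  Cert 7 [:: 27; 29; 30; 30; 30; 39; 39; 39; 41; 41; 48; 48] [:: 4; 3; 2; 1; 1; 1] 7;
  Cert 3 [:: 30; 30; 39; 41; 49] [:: 2; 1; 1; 1; 0; 0] 3;
  Cert 3 [:: 30; 30; 39; 41; 49] [:: 2; 1; 1; 1; 0; 0] 3;
  Cert 1 [:: 24; 39] [:: 1; 1; 0; 0; 0; 0] 1;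
  Cert 7 [:: 27; 27; 27; 29; 30; 39; 39; 39; 44; 44; 48; 48] [:: 4; 3; 2; 1; 1; 1] 7;
  Cert 3 [:: 27; 30; 39; 44; 49] [:: 3; 2; 2; 1; 1; 1] 6;
  Cert 3 [:: 27; 30; 39; 44; 49] [:: 3; 2; 2; 1; 1; 1] 6;
  Cert 3 [:: 27; 30; 39; 44; 49] [:: 3; 2; 2; 1; 1; 1] 6;
  Cert 5 [:: 27; 29; 30; 39; 39; 39; 56; 56] [:: 2; 2; 1; 1; 1; 1] 5;
  Cert 1 [:: 24; 39] [:: 1; 1; 0; 0; 0; 0] 1;
  Cert 3 [:: 29; 30; 39; 43; 48] [:: 2; 1; 1; 1; 0; 0] 3;
  Cert 3 [:: 28; 30; 39; 43; 49] [:: 2; 1; 1; 1; 0; 0] 3;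
  Cert 3 [:: 28; 30; 39; 43; 49] [:: 2; 1; 1; 1; 0; 0] 3;
  Cert 3 [:: 28; 28; 39; 43; 51] [:: 2; 1; 1; 1; 0; 0] 3;
  Cert 1 [:: 24; 39] [:: 1; 1; 0; 0; 0; 0] 1;
  Cert 3 [:: 29; 30; 39; 43; 48] [:: 5; 4; 2; 2; 1; 1] 9;
  Cert 8 [:: 29; 30; 30; 30; 30; 39; 39; 43; 43; 44; 49; 49; 49] [:: 4; 3; 2; 2; 1; 1] 8;
  Cert 8 [:: 29; 29; 29; 29; 30; 39; 39; 43; 43; 44; 50; 50; 50] [:: 4; 3; 2; 2; 1; 1] 8;
  Cert 5 [:: 23; 29; 30; 43; 43; 43; 52; 52] [:: 2; 2; 1; 1; 1; 1] 5;
  Cert 5 [:: 23; 29; 30; 43; 43; 43; 52; 52] [:: 2; 2; 1; 1; 1; 1] 5;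
  Cert 7 [:: 29; 29; 30; 30; 39; 43; 44; 44; 51; 51; 51] [:: 3; 2; 2; 2; 1; 1] 7;
  Cert 7 [:: 29; 29; 30; 30; 39; 43; 44; 44; 51; 51; 51] [:: 3; 2; 2; 2; 1; 1] 7;
  Cert 7 [:: 29; 29; 30; 30; 39; 43; 44; 44; 51; 51; 51] [:: 3; 2; 2; 2; 1; 1] 7;
  Cert 1 [:: 24; 39] [:: 1; 1; 0; 0; 0; 0] 1;
  Cert 3 [:: 23; 30; 43; 45; 48] [:: 3; 3; 1; 1; 1; 1] 6;
  Cert 5 [:: 30; 30; 30; 39; 43; 45; 49; 49] [:: 3; 2; 1; 1; 1; 0] 5;
  Cert 5 [:: 23; 27; 30; 45; 45; 45; 50; 50] [:: 2; 2; 1; 1; 1; 1] 5;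
  Cert 5 [:: 23; 27; 30; 45; 45; 45; 50; 50] [:: 2; 2; 1; 1; 1; 1] 5;
  Cert 5 [:: 23; 27; 30; 45; 45; 45; 50; 50] [:: 2; 2; 1; 1; 1; 1] 5;
  Cert 2 [:: 30; 45; 51] [:: 2; 1; 1; 1; 1; 0] 4;
  Cert 2 [:: 30; 45; 51] [:: 2; 1; 1; 1; 1; 0] 4;
  Cert 2 [:: 30; 45; 51] [:: 2; 1; 1; 1; 1; 0] 4;
  Cert 2 [:: 30; 45; 51] [:: 2; 1; 1; 1; 1; 0] 4;
  Cert 2 [:: 30; 45; 51] [:: 2; 1; 1; 1; 1; 0] 4;
  Cert 2 [:: 30; 45; 51] [:: 2; 1; 1; 1; 1; 0] 4;
  Cert 1 [:: 24; 39] [:: 1; 1; 0; 0; 0; 0] 1;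
  Cert 3 [:: 23; 27; 45; 46; 48] [:: 3; 3; 1; 1; 1; 1] 6;
  Cert 5 [:: 23; 27; 29; 46; 46; 46; 49; 49] [:: 2; 2; 1; 1; 1; 1] 5;
  Cert 5 [:: 23; 27; 29; 46; 46; 46; 49; 49] [:: 2; 2; 1; 1; 1; 1] 5;
  Cert 5 [:: 23; 27; 29; 46; 46; 46; 49; 49] [:: 2; 2; 1; 1; 1; 1] 5;
  Cert 5 [:: 23; 27; 29; 46; 46; 46; 49; 49] [:: 2; 2; 1; 1; 1; 1] 5;
  Cert 2 [:: 29; 46; 51] [:: 1; 1; 1; 1; 1; 1] 4;
  Cert 2 [:: 29; 46; 51] [:: 1; 1; 1; 1; 1; 1] 4;
  Cert 2 [:: 29; 46; 51] [:: 1; 1; 1; 1; 1; 1] 4;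
  Cert 2 [:: 29; 46; 51] [:: 1; 1; 1; 1; 1; 1] 4;
  Cert 2 [:: 29; 46; 51] [:: 1; 1; 1; 1; 1; 1] 4;
  Cert 2 [:: 29; 46; 51] [:: 1; 1; 1; 1; 1; 1] 4;
  Cert 2 [:: 29; 46; 51] [:: 1; 1; 1; 1; 1; 1] 4;
  Cert 2 [:: 29; 46; 51] [:: 1; 1; 1; 1; 1; 1] 4;
  Cert 2 [:: 29; 46; 51] [:: 1; 1; 1; 1; 1; 1] 4;
  Cert 2 [:: 29; 46; 51] [:: 1; 1; 1; 1; 1; 1] 4;
  Cert 2 [:: 29; 46; 51] [:: 1; 1; 1; 1; 1; 1] 4;
  Cert 1 [:: 31; 32] [:: 1; 1; 0; 0; 0; 0] 1;
  Cert 1 [:: 30; 33] [:: 1; 1; 0; 0; 0; 0] 1;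
  Cert 1 [:: 30; 33] [:: 1; 1; 0; 0; 0; 0] 1;
  Cert 1 [:: 30; 33] [:: 1; 1; 0; 0; 0; 0] 1;
  Cert 1 [:: 30; 33] [:: 1; 1; 0; 0; 0; 0] 1;
  Cert 5 [:: 31; 31; 31; 31; 33; 34; 36; 40; 48] [:: 4; 1; 1; 1; 1; 1] 5;
  Cert 1 [:: 28; 35] [:: 1; 1; 0; 0; 0; 0] 1;
  Cert 1 [:: 28; 35] [:: 1; 1; 0; 0; 0; 0] 1;
  Cert 1 [:: 28; 35] [:: 1; 1; 0; 0; 0; 0] 1;
  Cert 4 [:: 31; 31; 31; 35; 36; 40; 48] [:: 3; 1; 1; 1; 1; 0] 4;
  Cert 1 [:: 28; 35] [:: 1; 1; 0; 0; 0; 0] 1;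
  Cert 1 [:: 28; 35] [:: 1; 1; 0; 0; 0; 0] 1;
  Cert 4 [:: 30; 31; 31; 35; 37; 40; 48] [:: 3; 1; 1; 1; 1; 0] 4;
  Cert 1 [:: 28; 35] [:: 1; 1; 0; 0; 0; 0] 1;
  Cert 4 [:: 30; 30; 31; 35; 37; 41; 48] [:: 3; 1; 1; 1; 1; 0] 4;
  Cert 4 [:: 30; 30; 30; 35; 37; 41; 49] [:: 3; 1; 1; 1; 1; 0] 4;
  Cert 1 [:: 28; 35] [:: 1; 1; 0; 0; 0; 0] 1;
  Cert 1 [:: 28; 35] [:: 1; 1; 0; 0; 0; 0] 1;
  Cert 7 [:: 31; 31; 31; 31; 31; 35; 37; 38; 40; 40; 48; 48] [:: 5; 2; 2; 1; 1; 1] 7;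
  Cert 1 [:: 28; 35] [:: 1; 1; 0; 0; 0; 0] 1;
  Cert 3 [:: 31; 31; 38; 41; 48] [:: 4; 2; 1; 1; 1; 1] 6;
  Cert 3 [:: 30; 31; 38; 41; 49] [:: 2; 1; 1; 1; 0; 0] 3;
  Cert 1 [:: 28; 35] [:: 1; 1; 0; 0; 0; 0] 1;
  Cert 3 [:: 31; 31; 38; 41; 48] [:: 4; 2; 1; 1; 1; 1] 6;
  Cert 3 [:: 30; 31; 38; 41; 49] [:: 2; 1; 1; 1; 0; 0] 3;
  Cert 3 [:: 30; 31; 38; 41; 49] [:: 2; 1; 1; 1; 0; 0] 3;
  Cert 1 [:: 28; 35] [:: 1; 1; 0; 0; 0; 0] 1;
  Cert 3 [:: 31; 31; 38; 41; 48] [:: 4; 2; 1; 1; 1; 1] 6;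
  Cert 5 [:: 31; 31; 31; 38; 42; 44; 49; 49] [:: 3; 1; 1; 1; 1; 1] 5;
  Cert 5 [:: 31; 31; 31; 38; 42; 44; 49; 49] [:: 3; 1; 1; 1; 1; 1] 5;
  Cert 5 [:: 31; 31; 31; 38; 42; 44; 49; 49] [:: 3; 1; 1; 1; 1; 1] 5;
  Cert 5 [:: 31; 31; 31; 38; 42; 44; 49; 49] [:: 3; 1; 1; 1; 1; 1] 5;
  Cert 1 [:: 24; 39] [:: 1; 1; 0; 0; 0; 0] 1;
  Cert 1 [:: 24; 39] [:: 1; 1; 0; 0; 0; 0] 1;
  Cert 3 [:: 31; 31; 39; 40; 48] [:: 2; 1; 1; 1; 0; 0] 3;
  Cert 1 [:: 24; 39] [:: 1; 1; 0; 0; 0; 0] 1;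
  Cert 3 [:: 30; 31; 39; 41; 48] [:: 2; 1; 1; 1; 0; 0] 3;
  Cert 3 [:: 30; 30; 39; 41; 49] [:: 2; 1; 1; 1; 0; 0] 3;
  Cert 1 [:: 24; 39] [:: 1; 1; 0; 0; 0; 0] 1;
  Cert 3 [:: 30; 31; 39; 41; 48] [:: 2; 1; 1; 1; 0; 0] 3;
  Cert 3 [:: 30; 30; 39; 41; 49] [:: 2; 1; 1; 1; 0; 0] 3;
  Cert 3 [:: 30; 30; 39; 41; 49] [:: 2; 1; 1; 1; 0; 0] 3;
  Cert 1 [:: 24; 39] [:: 1; 1; 0; 0; 0; 0] 1;
  Cert 8 [:: 31; 31; 31; 31; 31; 39; 39; 41; 42; 44; 48; 48; 48] [:: 5; 3; 2; 1; 1; 1] 8;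
  Cert 5 [:: 30; 31; 31; 39; 42; 44; 49; 49] [:: 3; 2; 1; 1; 1; 0] 5;
  Cert 7 [:: 31; 31; 31; 31; 39; 42; 44; 44; 49; 49; 50] [:: 4; 2; 2; 1; 1; 1] 7;
  Cert 7 [:: 31; 31; 31; 31; 39; 42; 44; 44; 49; 49; 50] [:: 4; 2; 2; 1; 1; 1] 7;
  Cert 2 [:: 31; 39; 56] [:: 2; 1; 1; 1; 0; 1] 4;
  Cert 1 [:: 24; 39] [:: 1; 1; 0; 0; 0; 0] 1;
  Cert 3 [:: 28; 31; 39; 43; 48] [:: 2; 1; 1; 1; 0; 0] 3;
  Cert 3 [:: 28; 30; 39; 43; 49] [:: 2; 1; 1; 1; 0; 0] 3;
  Cert 3 [:: 28; 30; 39; 43; 49] [:: 2; 1; 1; 1; 0; 0] 3;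
  Cert 3 [:: 28; 28; 39; 43; 51] [:: 2; 1; 1; 1; 0; 0] 3;
  Cert 1 [:: 24; 39] [:: 1; 1; 0; 0; 0; 0] 1;
  Cert 5 [:: 31; 31; 31; 39; 43; 44; 48; 48] [:: 3; 2; 1; 1; 1; 0] 5;
  Cert 5 [:: 30; 30; 31; 39; 43; 44; 49; 49] [:: 3; 2; 1; 1; 1; 0] 5;
  Cert 9 [:: 31; 31; 31; 31; 31; 39; 43; 44; 44; 44; 49; 49; 50; 50] [:: 5; 3; 2; 2; 1; 1] 9;
  Cert 2 [:: 31; 43; 52] [:: 1; 1; 1; 0; 0; 0] 2;
  Cert 2 [:: 31; 43; 52] [:: 3; 2; 1; 1; 1; 1] 6;
  Cert 2 [:: 31; 44; 51] [:: 2; 1; 1; 1; 1; 0] 4;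
  Cert 2 [:: 31; 44; 51] [:: 2; 1; 1; 1; 1; 0] 4;
  Cert 2 [:: 31; 44; 51] [:: 2; 1; 1; 1; 1; 0] 4;
  Cert 1 [:: 24; 39] [:: 1; 1; 0; 0; 0; 0] 1;
  Cert 5 [:: 30; 31; 31; 39; 43; 45; 48; 48] [:: 3; 2; 1; 1; 1; 0] 5;
  Cert 5 [:: 30; 30; 30; 39; 43; 45; 49; 49] [:: 3; 2; 1; 1; 1; 0] 5;
  Cert 2 [:: 31; 45; 50] [:: 3; 2; 1; 1; 1; 1] 6;
  Cert 2 [:: 31; 45; 50] [:: 3; 2; 1; 1; 1; 1] 6;
  Cert 2 [:: 31; 45; 50] [:: 3; 2; 1; 1; 1; 1] 6;
  Cert 2 [:: 30; 45; 51] [:: 2; 1; 1; 1; 1; 0] 4;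
  Cert 2 [:: 30; 45; 51] [:: 2; 1; 1; 1; 1; 0] 4;
  Cert 2 [:: 30; 45; 51] [:: 2; 1; 1; 1; 1; 0] 4;
  Cert 2 [:: 30; 45; 51] [:: 2; 1; 1; 1; 1; 0] 4;
  Cert 2 [:: 30; 45; 51] [:: 2; 1; 1; 1; 1; 0] 4;
  Cert 2 [:: 30; 45; 51] [:: 2; 1; 1; 1; 1; 0] 4;
  Cert 1 [:: 24; 39] [:: 1; 1; 0; 0; 0; 0] 1;
  Cert 7 [:: 31; 31; 31; 31; 39; 43; 45; 46; 48; 48; 48] [:: 4; 3; 1; 1; 1; 1] 7;
  Cert 2 [:: 31; 46; 49] [:: 3; 2; 1; 1; 1; 1] 6;
  Cert 2 [:: 31; 46; 49] [:: 3; 2; 1; 1; 1; 1] 6;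
  Cert 2 [:: 31; 46; 49] [:: 3; 2; 1; 1; 1; 1] 6;
  Cert 2 [:: 31; 46; 49] [:: 3; 2; 1; 1; 1; 1] 6;
  Cert 2 [:: 29; 46; 51] [:: 1; 1; 1; 0; 0; 0] 2;
  Cert 2 [:: 29; 46; 51] [:: 1; 1; 1; 0; 0; 0] 2;
  Cert 9 [:: 31; 31; 31; 31; 45; 45; 46; 46; 51; 51; 51; 52; 56] [:: 4; 3; 2; 2; 1; 1] 9;
  Cert 2 [:: 29; 46; 51] [:: 1; 1; 1; 0; 0; 0] 2;
  Cert 7 [:: 31; 31; 31; 45; 46; 46; 51; 51; 53; 56] [:: 3; 2; 2; 1; 1; 1] 7;
  Cert 5 [:: 31; 31; 46; 46; 51; 53; 57] [:: 2; 1; 1; 1; 1; 1] 5;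
  Cert 2 [:: 29; 46; 51] [:: 1; 1; 1; 0; 0; 0] 2;
  Cert 7 [:: 31; 31; 31; 45; 46; 46; 51; 51; 53; 56] [:: 3; 2; 2; 1; 1; 1] 7;
  Cert 5 [:: 31; 31; 46; 46; 51; 53; 57] [:: 2; 1; 1; 1; 1; 1] 5;
  Cert 5 [:: 31; 31; 46; 46; 51; 53; 57] [:: 2; 1; 1; 1; 1; 1] 5;
  Cert 5 [:: 31; 31; 46; 46; 51; 53; 57] [:: 2; 1; 1; 1; 1; 1] 5;
  Cert 1 [:: 16; 47] [:: 1; 1; 0; 0; 0; 0] 1;
  Cert 2 [:: 31; 47; 48] [:: 1; 1; 1; 0; 0; 0] 2;
  Cert 2 [:: 30; 47; 49] [:: 1; 1; 1; 0; 0; 0] 2;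
  Cert 2 [:: 30; 47; 49] [:: 1; 1; 1; 0; 0; 0] 2;
  Cert 2 [:: 30; 47; 49] [:: 1; 1; 1; 0; 0; 0] 2;
  Cert 7 [:: 31; 31; 31; 47; 47; 47; 49; 50; 52; 56] [:: 3; 3; 1; 1; 1; 1] 7;
  Cert 2 [:: 28; 47; 51] [:: 1; 1; 1; 0; 0; 0] 2;
  Cert 2 [:: 28; 47; 51] [:: 1; 1; 1; 0; 0; 0] 2;
  Cert 5 [:: 31; 31; 47; 47; 51; 52; 56] [:: 2; 2; 1; 1; 1; 0] 5;
  Cert 2 [:: 28; 47; 51] [:: 1; 1; 1; 0; 0; 0] 2;
  Cert 5 [:: 30; 31; 47; 47; 51; 53; 56] [:: 2; 2; 1; 1; 1; 0] 5;
  Cert 5 [:: 30; 30; 47; 47; 51; 53; 57] [:: 2; 2; 1; 1; 1; 0] 5;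
  Cert 2 [:: 28; 47; 51] [:: 1; 1; 1; 0; 0; 0] 2;
  Cert 8 [:: 31; 31; 31; 47; 47; 47; 51; 53; 54; 56; 56] [:: 3; 3; 2; 1; 1; 1] 8;
  Cert 3 [:: 31; 47; 54; 57] [:: 2; 2; 1; 1; 1; 1] 6;
  Cert 3 [:: 31; 47; 54; 57] [:: 2; 2; 1; 1; 1; 1] 6;
  Cert 3 [:: 31; 47; 54; 57] [:: 2; 2; 1; 1; 1; 1] 6;
  Cert 2 [:: 24; 47; 55] [:: 1; 1; 1; 0; 0; 0] 2;
  Cert 3 [:: 31; 47; 55; 56] [:: 1; 1; 1; 1; 0; 0] 3;
  Cert 3 [:: 30; 47; 55; 57] [:: 1; 1; 1; 1; 0; 0] 3;
  Cert 3 [:: 30; 47; 55; 57] [:: 1; 1; 1; 1; 0; 0] 3;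
  Cert 7 [:: 31; 31; 47; 47; 55; 55; 57; 58; 60] [:: 2; 2; 2; 1; 1; 1] 7;
  Cert 3 [:: 28; 47; 55; 59] [:: 1; 1; 1; 1; 0; 0] 3;
  Cert 4 [:: 31; 47; 55; 59; 60] [:: 1; 1; 1; 1; 1; 0] 4;
  Cert 4 [:: 30; 47; 55; 59; 61] [:: 1; 1; 1; 1; 1; 0] 4;
  Cert 5 [:: 31; 47; 55; 59; 61; 62] [:: 1; 1; 1; 1; 1; 1] 5;
  Cert 1 [:: 63] [:: 1; 0; 0; 0; 0; 0] 1].

Definition singl (acc : seq bool) : bool := all (fun i => nth false acc (2 ^ (5 - i))) (iota 0 6).

Definition leaf (acc : seq bool) (tbl : seq cert) : option (seq cert) :=
  if singl acc then
    match tbl with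
    | c :: r => if valid (nth false acc) c then Some r else None
    | [::] => None
    end
  else Some tbl.

Fixpoint srch (fuel : nat) (acc : seq bool) (tbl : seq cert) : option (seq cert) :=
  match fuel with
  | 0 => leaf acc tbl
  | f.+1 =>
    match srch f (rcons acc false) tbl with
    | None => None
    | Some t => if all (nth false acc) (preds (size acc)) then srch f (rcons acc true) t else Some t
    end
  end.

Lemma srch_ok : srch 64 [::] table = Some [::].
Proof. vm_compute. reflexivity. Qed.

Local Open Scope ring_scope.

Section Gen.
Variable n : nat.
Implicit Types (S : R) (D : 'I_n -> R).

Definition RCert S D (k m : nat) : Prop :=
  [/\ (0 < k)%N, (0 < m)%N,
      (exists P, k_packing S D k P /\ size P = m) &
      exists y : 'I_n -> R, [/\ forall i, 0 <= y i,
         forall B, feasible S D B -> \sum_(i in B) y i <= 1 &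
         k%:R * \sum_i y i = m%:R]].

Lemma sum_cnt (T : Type) (P : seq T) (a : pred T) (c : R) :
  \sum_(B <- P | a B) c = c *+ count a P.
Proof.
elim: P => [|B P IH]; first by rewrite big_nil.
by rewrite big_cons /= IH; case: (a B) => //=; rewrite mulrS.
Qed.

Lemma sum_exch (T : Type) (P : seq T) (mem : T -> 'I_n -> bool) (w : T -> R) (y : 'I_n -> R) :
  \sum_i y i * \sum_(p <- P | mem p i) w p = \sum_(p <- P) w p * \sum_(i | mem p i) y i.
Proof.
under eq_bigr => i _ do rewrite big_mkcond mulr_sumr.
rewrite exchange_big /=; apply: eq_bigr => p _.
rewrite [in RHS]big_mkcond [in RHS]mulr_sumr; apply: eq_bigr => i _ /=.
by case: (mem p i); rewrite ?mulr0 // mulrC.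
Qed.

Lemma RCert_egal S D k m : RCert S D k m -> egal_time S D (k%:R / m%:R).
Proof.
case=> k0 m0 [P [[Pf Pc] Ps]] [y [y0 yf yk]].
have m0' : (0 : R) < m%:R by rewrite ltr0n.
split.
  exists [seq (m%:R^-1, B) | B <- P]; split; first split.
  - move=> p /mapP [B BP ->] /=; split; first by rewrite invr_gt0.
    exact: Pf.
  - by rewrite big_map sum_cnt count_predT Ps -[_ *+ m]mulr_natr mulVf // gt_eqF.
  - move=> i; rewrite /conn_time big_map sum_cnt /= Pc.
    by rewrite -[m%:R^-1 *+ k]mulr_natr mulrC.
move=> sch [schp sch1].
case: (boolP [exists i, conn_time sch i <= k%:R / m%:R]) => [/existsP [i Hi]|H].
  by exists i.
exfalso.
have Hlt : forall i, k%:R / m%:R < conn_time sch i.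
  by move=> i; rewrite ltNge; move/existsPn: H; apply.
have sy0 : 0 < \sum_i y i.
  have : (0 : R) < k%:R * \sum_i y i by rewrite yk.
  by rewrite pmulr_rgt0 // ltr0n.
have [j yj] : exists j, 0 < y j.
  apply/existsP; apply: contraLR sy0 => /existsPn Hn.
  rewrite -leNgt; apply: sumr_le0 => i _; by rewrite leNgt Hn.
have up : \sum_i y i * conn_time sch i <= 1.
  rewrite /conn_time (sum_exch sch (fun p i => i \in p.2) (fun p => p.1)).
  rewrite -sch1 big_seq_cond [X in _ <= X]big_seq_cond.
  apply: ler_sum => p /andP [pin _].
  have [p0 pf] := schp p pin.
  by rewrite -[X in _ <= X]mulr1; apply: ler_wpM2l; [exact: ltW | exact: yf].
have e1 : \sum_i y i * (k%:R / m%:R) = 1.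
  rewrite -mulr_suml mulrC mulrAC yk mulfV //.
  by rewrite gt_eqF.
have low : \sum_i y i * (k%:R / m%:R) < \sum_i y i * conn_time sch i.
  rewrite [X in X < _](bigD1 j) // [X in _ < X](bigD1 j) //=.
  apply: ltr_leD; first by rewrite ltr_pM2l.
  apply: ler_sum => i _; rewrite ler_wpM2l //; exact: ltW.
by have := lt_le_trans low up; rewrite e1 ltxx.
Qed.

Lemma RCert_OPT S D k m : RCert S D k m -> is_OPT S D k m.
Proof.
case=> k0 m0 [P HP] [y [y0 yf yk]]; split; first by exists P.
move=> Q [Qf Qc].
have H1 : \sum_(B <- Q) \sum_(i in B) y i <= (size Q)%:R.
  rewrite -count_predT -sum_cnt big_seq_cond [X in _ <= X]big_seq_cond.
  by apply: ler_sum => B /andP [BQ _]; apply: yf; apply: Qf.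
have H2 : \sum_(B <- Q) \sum_(i in B) y i = m%:R.
  have := sum_exch Q (fun B i => i \in B) (fun _ => 1) y.
  under eq_bigr => i _ do rewrite sum_cnt Qc.
  under [X in _ = X -> _]eq_bigr => B _ do rewrite mul1r.
  move=> <-; rewrite -yk mulr_sumr; apply: eq_bigr => i _.
  by rewrite mulr_natr mulr_natl.
by rewrite -(ler_nat R) -H2.
Qed.

Lemma RCert_K S D k m : RCert S D k m -> K_property S D k.
Proof.
move=> H; exists (k%:R / m%:R), m; split; [exact: RCert_egal H | split; [exact: RCert_OPT H | by []]].
Qed.

Lemma egal_uniq S D t1 t2 : egal_time S D t1 -> egal_time S D t2 -> t1 = t2.
Proof.
move=> [[s1 [h1 c1]] u1] [[s2 [h2 c2]] u2].
have [i Hi] := u2 s1 h1; have [j Hj] := u1 s2 h2.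
apply/eqP; rewrite eq_le; apply/andP; split.
  exact: le_trans (c1 i) Hi.
exact: le_trans (c2 j) Hj.
Qed.

Lemma K_min S D k0 : (0 < k0)%N -> K_property S D k0 ->
  exists kD, is_K_of S D kD /\ (kD <= k0)%N.
Proof.
elim: k0 {-2}k0 (leqnn k0) => [|N IH] k0 Hk0 Hpos HK.
  by move: Hpos; rewrite leqn0 in Hk0; rewrite (eqP Hk0).
case: (classic (exists k', [/\ (0 < k')%N, (k' < k0)%N & K_property S D k'])).
  move=> [k' [p1 p2 p3]].
  have [kD [HD1 HD2]] := IH k' (leq_trans (leq_trans p2 Hk0) (leqnn _) : (k' <= N)%N) p1 p3.
  by exists kD; split => //; apply: leq_trans HD2 (ltnW p2).
move=> Hn; exists k0; split; last by []. split; first by []. split; first by []. move=> k' p1 p2 p3; apply: Hn; by exists k'.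
Qed.

End Gen.

Lemma RCert_perm n S (D : 'I_n -> R) (p : {perm 'I_n}) k m :
  RCert S (fun i => D (p i)) k m -> RCert S D k m.
Proof.
case=> k0 m0 [P [[Pf Pc] Ps]] [y [y0 yf yk]].
split => //.
  exists (map (fun B : {set 'I_n} => p @: B) P); split; last by rewrite size_map.
  split.
    move=> B /mapP [B' B'P ->]; rewrite /feasible big_imset /=; first exact: Pf.
    by move=> a b _ _; apply: perm_inj.
  move=> i; rewrite count_map -(Pc ((p^-1)%g i)); apply: eq_count => B /=.
  by rewrite -{1}(permKV p i) mem_imset //; apply: perm_inj.
exists (fun i => y ((p^-1)%g i)); split => //.
  move=> B fB.
  have -> : \sum_(i in B) y ((p^-1)%g i) = \sum_(j in (p^-1)%g @: B) y j.
    by rewrite big_imset //; move=> a b _ _; apply: perm_inj.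
  apply: yf; rewrite /feasible big_imset /=; last by move=> a b _ _; apply: perm_inj.
  by under eq_bigr => i _ do rewrite permKV.
by rewrite -yk [in LHS](reindex_inj (@perm_inj _ p)) /=; under eq_bigr => i _ do rewrite permK.
Qed.

Definition setOf (x : nat) : {set 'I_6} := [set i : 'I_6 | bitb x i].

Lemma sum_setOf (g : 'I_6 -> R) x :
  \sum_(i in setOf x) g i = \sum_(i < 6) (if bitb x i then g i else 0).
Proof. by rewrite big_mkcond; apply: eq_bigr => i _; rewrite in_set. Qed.

Lemma nsumE ys x : nsum ys x = (\sum_(i < 6) (if bitb x i then nth 0%N ys i else 0))%N.
Proof.
rewrite /nsum -(big_mkord xpredT (fun i => if bitb x i then nth 0%N ys i else 0%N)).
by rewrite sumnE big_map /index_iota subn0.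
Qed.

Lemma nsumR ys x : \sum_(i < 6) (if bitb x i then (nth 0%N ys i)%:R else 0) = (nsum ys x)%:R :> R.
Proof.
by rewrite nsumE natr_sum; apply: eq_bigr => i _; case: (bitb x i).
Qed.

Lemma bits_ok (b0 b1 b2 b3 b4 b5 : bool) i : (i < 6)%N ->
  bitb ((b0:nat) * 32 + (b1:nat) * 16 + (b2:nat) * 8 + (b3:nat) * 4 + (b4:nat) * 2 + (b5:nat)) i
  = nth false [:: b0; b1; b2; b3; b4; b5] i.
Proof.
by case: b0; case: b1; case: b2; case: b3; case: b4; case: b5;
  case: i => [|[|[|[|[|[|i]]]]]].
Qed.

Lemma setOf_surj (A : {set 'I_6}) : exists x, (x < 64)%N /\ A = setOf x.
Proof.
pose b (j : nat) := (inord j : 'I_6) \in A.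
exists ((b 0%N:nat) * 32 + (b 1%N:nat) * 16 + (b 2%N:nat) * 8 + (b 3%N:nat) * 4 + (b 4%N:nat) * 2 + (b 5%N:nat))%N.
split.
  by rewrite /b; case: (_ \in A); case: (_ \in A); case: (_ \in A); case: (_ \in A); case: (_ \in A); case: (_ \in A).
apply/setP => i; rewrite in_set bits_ok // /b.
have -> : i = inord i by apply/val_inj; rewrite /= inordK.
by case: i => [[|[|[|[|[|[|i]]]]]]] //= Hi; rewrite !inordK.
Qed.

Lemma sumyE (ys : seq nat) (L : nat) x :
  \sum_(i in setOf x) ((nth 0%N ys i)%:R / L%:R) = (nsum ys x)%:R / L%:R :> R.
Proof.
rewrite -nsumR mulr_suml big_mkcond; apply: eq_bigr => i _; rewrite in_set.
by case: (bitb x i); rewrite ?mul0r.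
Qed.

Lemma valid_RCert S (D : 'I_6 -> R) (fam : nat -> bool) (c : cert) :
  (forall x, (x < 64)%N -> fam x = feasible S D (setOf x)) ->
  valid fam c -> RCert S D (ck c) (size (cbins c)).
Proof.
move=> Hfam /and5P [k0 k9 L0 Hb /and3P [Hc Hy Hs]].
have L0' : (0 : R) < (cL c)%:R by rewrite ltr0n.
have sumy := sumyE (cys c) (cL c).
split => //.
- by move: Hc; case: (cbins c) => //=; rewrite eq_sym (negbTE (lt0n_neq0 k0)).
- exists (map setOf (cbins c)); split; last by rewrite size_map.
  split.
    move=> B /mapP [b bin ->]; move/allP: Hb => /(_ b bin) /andP [b64 fb].
    by rewrite -Hfam.
  move=> i; rewrite count_map; move/allP: Hc => /(_ i); rewrite mem_iota ltn_ord => /(_ isT) /eqP <-.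
  by apply: eq_count => b /=; rewrite in_set.
exists (fun i => (nth 0%N (cys c) i)%:R / (cL c)%:R); split.
- by move=> i; rewrite divr_ge0 ?ler0n.
- move=> B fB; have [x [x64 eB]] := setOf_surj B; rewrite eB in fB *.
  rewrite sumy ler_pdivrMr // mul1r ler_nat.
  by move/allP: Hy => /(_ x); rewrite mem_iota x64 Hfam // fB => /(_ isT).
transitivity (((ck c)%:R : R) * \sum_(i in setOf 63) ((nth 0%N (cys c) i)%:R / (cL c)%:R)).
  congr (_ * _); rewrite [RHS]big_mkcond; apply: eq_bigr => i _; rewrite in_set.
  by case: i => [[|[|[|[|[|[|i]]]]]]].
rewrite sumy mulrA -natrM (eqP Hs) natrM mulfK //.
by rewrite gt_eqF.
Qed.


Definition drop_ok (x y : nat) := all (fun k => bitb y k ==> bitb x k) (iota 0 6).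
Definition swap_ok (x y : nat) := has (fun i => [&& bitb x i, ~~ bitb x i.+1 &
   all (fun k => bitb y k == ((bitb x k && (k != i)) || (k == i.+1))) (iota 0 6)]) (iota 0 5).

Lemma preds_ok : all (fun x => all (fun y => (y < x)%N && (drop_ok x y || swap_ok x y)) (preds x)) (iota 0 64).
Proof. by vm_compute. Qed.

Lemma feasE S (D : 'I_6 -> R) x :
  feasible S D (setOf x) = (\sum_(i < 6) (if bitb x i then D i else 0) <= S).
Proof. by rewrite /feasible sum_setOf. Qed.

Lemma sum2 (g : 'I_6 -> R) (a b : 'I_6) : b != a ->
  \sum_k g k = g a + (g b + \sum_(k < 6 | (k != a) && (k != b)) g k).
Proof.
move=> ba; rewrite (bigD1 a) // (bigD1 b) //=; congr (_ + (_ + _)).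
Qed.

Lemma fam_pred S (D : 'I_6 -> R)
  (Dsort : forall i, (i < 5)%N -> D (inord i.+1) <= D (inord i))
  (D0 : forall i, 0 <= D i) x y :
  (x < 64)%N -> y \in preds x -> feasible S D (setOf x) -> feasible S D (setOf y).
Proof.
move=> x64 yp; move/allP: preds_ok => /(_ x); rewrite mem_iota x64 => /(_ isT).
move/allP => /(_ y yp) /andP [_ /orP [Hd | Hs]]; rewrite !feasE; apply: le_trans.
  apply: ler_sum => k _; move/allP: Hd => /(_ k); rewrite mem_iota ltn_ord => /(_ isT).
  by case: (bitb y k) => /= [-> // | _]; case: (bitb x k).
move/hasP: Hs => [i]; rewrite mem_iota add0n => /andP [_ i5] /and3P [xi xi1 /allP Hk].
have i6 : (i < 6)%N by apply: ltn_trans i5 _.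
have i16 : (i.+1 < 6)%N by [].
pose a : 'I_6 := inord i; pose b : 'I_6 := inord i.+1.
have va : (a : nat) = i by rewrite /= inordK.
have vb : (b : nat) = i.+1 by rewrite /= inordK.
have ba : b != a by apply/eqP => /(congr1 val) /=; rewrite va vb => /eqP; rewrite eqn_leq ltnn.
have Hk' (k : 'I_6) : bitb y k = (bitb x k && (val k != i)) || (val k == i.+1).
  by apply/eqP; apply: Hk; rewrite mem_iota ltn_ord.
rewrite !(sum2 _ ba).
rewrite !Hk' va vb (va : val a = i) (vb : val b = i.+1) eqxx xi (negbTE xi1) (ltn_eqF (ltnSn i)) (gtn_eqF (ltnSn i)) /=.
have -> : \sum_(k < 6 | (k != a) && (k != b)) (if bitb y k then D k else 0) =
          \sum_(k < 6 | (k != a) && (k != b)) (if bitb x k then D k else 0).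
  apply: eq_bigr => k /andP [ka kb]; rewrite Hk'.
  have kai : (val k != i) by apply: contra ka => /eqP ki; apply/eqP/val_inj; rewrite /= ki va.
  have kbi : (val k != i.+1)%N by apply: contra kb => /eqP ki; apply/eqP/val_inj; rewrite /= ki vb.
  by rewrite kai (negbTE kbi) andbT orbF.
by rewrite !add0r lerD2r eqxx; apply: Dsort.
Qed.

Lemma sort_exists (D : 'I_6 -> R) :
  exists p : {perm 'I_6}, forall i, (i < 5)%N -> D (p (inord i.+1)) <= D (p (inord i)).
Proof.
pose leT := fun a b : 'I_6 => D b <= D a.
pose s := sort leT (enum 'I_6).
have ss : size s = 6 by rewrite size_sort size_enum_ord.
have us : uniq s by rewrite sort_uniq enum_uniq.
have srt : sorted leT s by apply: sort_sorted => a b; rewrite /leT le_total.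
pose f (i : 'I_6) := nth ord0 s i.
have finj : injective f.
  by move=> a b /eqP; rewrite /f nth_uniq ?ss // => /eqP /val_inj.
exists (perm finj) => i i5; rewrite !permE /f !inordK //; last by apply: ltn_trans i5 _.
by move/(sortedP ord0): srt => /(_ i); rewrite ss; apply.
Qed.

Lemma srch_sub fuel acc tbl r : srch fuel acc tbl = Some r -> forall p, has p r -> has p tbl.
Proof.
elim: fuel acc tbl r => [|f IH] acc tbl r /=.
  rewrite /leaf; case: (singl acc); last by case=> ->.
  case: tbl => // c t; case: (valid _ c) => // [[<-]] p /= ->; exact: orbT.
case E1: (srch f (rcons acc false) tbl) => [t|] // H p Hp.
apply: (IH _ _ _ E1); move: H; case: (all _ _); last by move=> [->].
by move/IH; apply.
Qed.

Lemma srch_sound (fam : nat -> bool) :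
  (forall x y, (x < 64)%N -> y \in preds x -> fam x -> fam y) ->
  forall fuel acc tbl r, srch fuel acc tbl = Some r -> (size acc + fuel = 64)%N ->
  acc = mkseq fam (size acc) ->
  singl (mkseq fam 64) -> has (valid (nth false (mkseq fam 64))) tbl.
Proof.
move=> Hc; elim=> [|f IH] acc tbl r /=.
  rewrite addn0 /leaf => H s64 Ha sg; move: H; rewrite Ha s64 sg.
  by case: tbl => // c t; case E: (valid _ c) => //= _; rewrite E.
set x := size acc => H sx Ha sg.
have x64 : (x < 64)%N by rewrite -sx addnS ltnS leq_addr.
move: H; case E1: (srch f (rcons acc false) tbl) => [t|] // H.
case Fx: (fam x).
  have Hall : all (nth false acc) (preds x).
    apply/allP => y yp.
    have yx : (y < x)%N.
      by move/allP: preds_ok => /(_ x); rewrite mem_iota x64 => /(_ isT) /allP /(_ y yp) /andP [].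
    by rewrite Ha nth_mkseq //; apply: (Hc x).
  move: H; rewrite Hall => H.
  have := IH (rcons acc true) t r H; rewrite size_rcons -/x addSnnS => /(_ sx).
  rewrite Ha -Fx -mkseqS => /(_ erefl sg).
  exact: (srch_sub E1).
apply: (IH (rcons acc false) tbl t E1); rewrite ?size_rcons -/x ?addSnnS //.
by rewrite Ha -Fx -mkseqS.
Qed.

Lemma has_ex (T : Type) (p : pred T) s : has p s -> exists x, p x.
Proof. by elim: s => //= x s IH /orP [H|/IH]; [exists x|]. Qed.

Lemma single_ok : all (fun i => all (fun k => bitb (2 ^ (5 - i)) k == (k == i)) (iota 0 6)) (iota 0 6).
Proof. by vm_compute. Qed.

Lemma upper S (D : 'I_6 -> R) : valid_instance S D -> exists kD, is_K_of S D kD /\ (kD <= 9)%N.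
Proof.
move=> [S0 HD]; have [p Hp] := sort_exists D.
pose D' := fun i => D (p i).
pose fam x := feasible S D' (setOf x).
have Hc : forall x y, (x < 64)%N -> y \in preds x -> fam x -> fam y.
  move=> x y; apply: fam_pred => // i; exact: ltW (HD (p i)).1.
have sg : singl (mkseq fam 64).
  apply/allP => i; rewrite mem_iota add0n => /andP [_ i6].
  rewrite nth_mkseq; last by case: i i6 => [|[|[|[|[|[|]]]]]].
  rewrite /fam feasE.
  have -> : \sum_(k < 6) (if bitb (2 ^ (5 - i)) k then D' k else 0) =
            \sum_(k < 6) (if k == inord i then D' k else 0).
    apply: eq_bigr => k _.
    have -> : bitb (2 ^ (5 - i)) k = (val k == i).
      move/allP: single_ok => /(_ i); rewrite mem_iota i6 => /(_ isT) /allP /(_ k).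
      by rewrite mem_iota ltn_ord => /(_ isT) /eqP.
    have -> : (k == inord i) = (val k == i) by rewrite -(inj_eq val_inj) /= inordK.
    by [].
  by rewrite -big_mkcond big_pred1_eq; exact: (HD (p (inord i))).2.
have := srch_sound Hc srch_ok (erefl _) (erefl _) sg.
move/has_ex => [c Hv].
have Hv' := Hv; move/and5P: Hv' => [k0 k9 _ _ _].
have HR := valid_RCert (fam := nth false (mkseq fam 64)) (fun x x64 => nth_mkseq false fam x64) Hv.
have := K_min k0 (RCert_K (RCert_perm HR)).
move=> [kD [H1 H2]]; exists kD; split => //; exact: leq_trans H2 k9.
Qed.

Definition ds : seq nat := [:: 22; 21; 20; 2; 1; 1]%N.
Definition D0 (i : 'I_6) : R := (nth 0%N ds i)%:R.
Definition S0 : R := 43%:R.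
Definition cert16 := Cert 9 [:: 27; 27; 27; 28; 28; 28; 28; 39; 39; 39; 39; 39; 41; 42; 48; 48]%N
                          [:: 5; 4; 3; 2; 1; 1]%N 9.

Lemma valid16 : valid (fun x => nsum ds x <= 43)%N cert16.
Proof. by vm_compute. Qed.

Lemma lower : exists (S : R) (D : 'I_6 -> R), valid_instance S D /\ is_K_of S D 9.
Proof.
exists S0, D0; split.
  split; first by rewrite /S0 ltr0n.
  by move=> i; rewrite /D0 /S0 ltr0n ler_nat; case: i => [[|[|[|[|[|[|]]]]]]].
have HR : RCert S0 D0 9 16.
  apply: (valid_RCert (c := cert16) _ valid16) => x _.
  by rewrite feasE /D0 nsumR /S0 ler_nat.
split => //; split; first exact: RCert_K HR.
move=> k' k0 k9 [t [m [Ht [_ Htk]]]].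
have := egal_uniq Ht (RCert_egal HR); rewrite Htk.
have [->|m0] := eqVneq m 0%N.
  rewrite invr0 mulr0 => /eqP; rewrite eq_sym mulf_eq0 invr_eq0 !pnatr_eq0 //.
move/eqP; rewrite eqr_div ?pnatr_eq0 // -!natrM eqr_nat => /eqP.
move: k0 k9; clear; lia.
Qed.

Local Close Scope ring_scope.

Theorem proposition2 : is_K_n 6 9.
Proof.
split; last exact: lower.
exact: upper.
Qed.
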